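(* Let $\pi:E\to B$ be a semifunctor between small semicategories. The following are equivalent: (1) $\pi$ is exponentiable in $\mathbf{Semicat}/B$; (2) the virtual double functor $\nabla\pi:\mathbb{L}(B)\to\mathbb{S}\mathrm{pan}$ corresponding to $\pi$ preserves opcartesian multicells; (3) for every morphism $f$ of $E$ and every factorization $\pi(f)=g_1\cdot\ldots\cdot g_n$ ($n\ge2$) in $B$, there is exactly one tuple $(f_1,\dots,f_n)$ of composable morphisms of $E$ with $f=f_1\cdot\ldots\cdot f_n$ and $\pi(f_i)=g_i$ for all $i$; (4) the same as (3) but only for binary factorizations ($n=2$).
   Context: A semicategory is a directed graph with an associative composition (no identities required); a semifunctor preserves the graph and composition; $g\cdot h$ denotes composition in diagrammatic order. $\pi$ is exponentiable in the slice $\mathbf{Semicat}/B$ if the functor $\mathbf{Semicat}/B\to\mathbf{Semicat}/B$ sending $X\to B$ to $X\times_B E\to B$ has a right adjoint. A virtual double category (VDC) has objects, tight arrows forming a category, loose arrows, and $n$-ary multicells from a composable path of $n$ loose arrows to a loose arrow with two tight sides, with identities and an associative unital composition. A globular multicell $\alpha$ (identity tight sides) from $(\varphi_1,\dots,\varphi_n):x\nrightarrow y$ to $\psi$ is opcartesian if for all paths $\chi_0$ ending at $x$ and $\chi_1$ starting at $y$, every multicell $\beta$ with loose source $(\chi_0,\varphi_1,\dots,\varphi_n,\chi_1)$ factors uniquely as $\frac{\mathrm{id}_{\chi_0}\,\alpha\,\mathrm{id}_{\chi_1}}{\beta'}$. $\mathbb{S}\mathrm{pan}$ is the VDC with sets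 as objects, functions as tight arrows, spans as loose arrows, and multicells from spans $S_1,\dots,S_n$ to $T$ given by maps from the iterated pullback $S_1\times_{X_1}\cdots\times_{X_{n-1}}S_n$ to $T$ compatible with legs and tight sides. $\mathbb{L}(B)$ is the VDC whose objects are the objects of $B$, with only identity tight arrows, whose loose arrows are the morphisms of $B$, and which has, for $n\ge1$, a unique globular $n$-ary multicell from $(f_1,\dots,f_n)$ to $g$ exactly when $g=f_1\cdot\ldots\cdot f_n$, and no other multicells. $\nabla\pi:\mathbb{L}(B)\to\mathbb{S}\mathrm{pan}$ sends an object $b$ to the set $\pi^{-1}(b)$ of objects of $E$ over $b$, a morphism $f:b_1\to b_2$ to the span $\pi^{-1}(b_1)\leftarrow\{\text{morphisms of }E\text{ over }f\}\rightarrow\pi^{-1}(b_2)$ given by domain and codomain, and a multicell $(f_1,\dots,f_n)\to g$ to the map of spans given by composition in $E$. *)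

(* Defs.v *)
From Stdlib Require Import List ProofIrrelevance.
Import ListNotations.
Unset Implicit Arguments.


(* in diagrammatic order: [comp f g p] is f . g, defined when           *)
(* [p : cod f = dom g].  All semicategories live in one fixed universe  *)
(* ("small").                                                           *)
Record semicat := {
  ob : Type;
  mor : Type;
  dom : mor -> ob;
  cod : mor -> ob;
  comp : forall f g : mor, cod f = dom g -> mor;
  comp_dom : forall f g p, dom (comp f g p) = dom f;
  comp_cod : forall f g p, cod (comp f g p) = cod g;
  comp_assoc : forall f g h (p : cod f = dom g) (q : cod g = dom h)
                 (p' : cod (comp f g p) = dom h) (q' : cod f = dom (comp g h q)),
      comp (comp f g p) h p' = comp f (comp g h q) q'
}.
Arguments dom {s} _.
Arguments cod {s} _.
Arguments comp {s} f g _.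

Record semifunctor (X Y : semicat) := {
  fob : ob X -> ob Y;
  fmor : mor X -> mor Y;
  fdom : forall f, dom (fmor f) = fob (dom f);
  fcod : forall f, cod (fmor f) = fob (cod f);
  fcomp : forall f g (p : cod f = dom g) (p' : cod (fmor f) = dom (fmor g)),
      fmor (comp f g p) = comp (fmor f) (fmor g) p'
}.
Arguments fob {X Y} _ _.
Arguments fmor {X Y} _ _.
Arguments fdom {X Y} _ _.
Arguments fcod {X Y} _ _.
Arguments fcomp {X Y} _ f g p p'.

Definition sfeq {X Y : semicat} (F G : semifunctor X Y) : Prop :=
  (forall x, fob F x = fob G x) /\ (forall f, fmor F f = fmor G f).

Definition sfcomp {X Y Z : semicat} (F : semifunctor X Y) (G : semifunctor Y Z)
  : semifunctor X Z.
Proof.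
  refine {| fob := fun x => fob G (fob F x);
            fmor := fun f => fmor G (fmor F f) |}.
  - intro f. rewrite fdom, fdom. reflexivity.
  - intro f. rewrite fcod, fcod. reflexivity.
  - intros f g p p'.
    assert (p1 : cod (fmor F f) = dom (fmor F g))
      by (rewrite fcod, fdom, p; reflexivity).
    rewrite (fcomp F f g p p1). apply fcomp.
Defined.

Lemma comp_pi (X : semicat) (f g : mor X) (p p' : cod f = dom g) :
  comp f g p = comp f g p'.
Proof. rewrite (proof_irrelevance _ p p'). reflexivity. Qed.

Lemma comp_congr (X : semicat) (f f' g g' : mor X) (p : cod f = dom g)
  (p' : cod f' = dom g') : f = f' -> g = g' -> comp f g p = comp f' g' p'.
Proof. intros -> ->. apply comp_pi. Qed.

Record sobj (B : semicat) := { carrier : semicat; sproj : semifunctor carrier B }.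
Arguments carrier {B} _.
Arguments sproj {B} _.
Arguments Build_sobj {B} _ _.

Definition over {B : semicat} (X Y : sobj B) (h : semifunctor (carrier X) (carrier Y))
  : Prop := sfeq (sfcomp h (sproj Y)) (sproj X).

Section Pullback.
Variables (B E : semicat) (pi : semifunctor E B) (X : sobj B).

Definition pbob : Type := { p : ob (carrier X) * ob E | fob (sproj X) (fst p) = fob pi (snd p) }.
Definition pbmor : Type := { p : mor (carrier X) * mor E | fmor (sproj X) (fst p) = fmor pi (snd p) }.

Definition pbdom (u : pbmor) : pbob.
Proof.
  refine (exist _ (dom (fst (proj1_sig u)), dom (snd (proj1_sig u))) _); simpl.
  rewrite <- fdom, <- fdom. f_equal. exact (proj2_sig u).
Defined.

Definition pbcod (u : pbmor) : pbob.
Proof.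
  refine (exist _ (cod (fst (proj1_sig u)), cod (snd (proj1_sig u))) _); simpl.
  rewrite <- fcod, <- fcod. f_equal. exact (proj2_sig u).
Defined.

Definition pbcomp (u v : pbmor) (h : pbcod u = pbdom v) : pbmor.
Proof.
  assert (h1 : cod (fst (proj1_sig u)) = dom (fst (proj1_sig v)))
    by exact (f_equal (fun o => fst (proj1_sig o)) h).
  assert (h2 : cod (snd (proj1_sig u)) = dom (snd (proj1_sig v)))
    by exact (f_equal (fun o => snd (proj1_sig o)) h).
  refine (exist _ (comp _ _ h1, comp _ _ h2) _); simpl.
  assert (h3 : cod (fmor (sproj X) (fst (proj1_sig u)))
               = dom (fmor (sproj X) (fst (proj1_sig v))))
    by (rewrite fcod, fdom, h1; reflexivity).
  assert (h4 : cod (fmor pi (snd (proj1_sig u))) = dom (fmor pi (snd (proj1_sig v))))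
    by (rewrite fcod, fdom, h2; reflexivity).
  rewrite (fcomp _ _ _ h1 h3), (fcomp _ _ _ h2 h4).
  apply comp_congr; [exact (proj2_sig u) | exact (proj2_sig v)].
Defined.

Lemma pbmor_eq (u v : pbmor) : proj1_sig u = proj1_sig v -> u = v.
Proof.
  destruct u as [a ha], v as [b hb]; simpl; intros ->.
  f_equal; apply proof_irrelevance.
Qed.
Lemma pbob_eq (u v : pbob) : proj1_sig u = proj1_sig v -> u = v.
Proof.
  destruct u as [a ha], v as [b hb]; simpl; intros ->.
  f_equal; apply proof_irrelevance.
Qed.

Definition pbc : semicat.
Proof.
  refine {| ob := pbob; mor := pbmor; dom := pbdom; cod := pbcod; comp := pbcomp |}.
  - intros f g p; apply pbob_eq; simpl; rewrite !comp_dom; reflexivity.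
  - intros f g p; apply pbob_eq; simpl; rewrite !comp_cod; reflexivity.
  - intros f g h p q p' q'; apply pbmor_eq; simpl; f_equal; apply comp_assoc.
Defined.

Definition pbproj : semifunctor pbc B.
Proof.
  refine {| fob := fun (x : ob pbc) => fob (sproj X) (fst (proj1_sig (x : pbob)));
            fmor := fun (u : mor pbc) => fmor (sproj X) (fst (proj1_sig (u : pbmor))) |}.
  - intro f; apply fdom.
  - intro f; apply fcod.
  - intros f g p p'; simpl; apply fcomp.
Defined.

Definition pbobj : sobj B := {| carrier := pbc; sproj := pbproj |}.
End Pullback.

Arguments pbc {B E} pi X.
Arguments pbob {B E} pi X.
Arguments pbmor {B E} pi X.
Arguments pbob_eq {B E pi X} u v _.
Arguments pbmor_eq {B E pi X} u v _.
Arguments pbobj {B E} pi X.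

Definition pbmap {B E : semicat} (pi : semifunctor E B) {X X' : sobj B}
  (k : semifunctor (carrier X) (carrier X')) (hk : over X X' k)
  : semifunctor (pbc pi X) (pbc pi X').
Proof.
  refine {| fob := fun (x : ob (pbc pi X)) =>
              (exist _ (fob k (fst (proj1_sig (x : pbob pi X))), snd (proj1_sig (x : pbob pi X))) _
                : ob (pbc pi X'));
            fmor := fun (u : mor (pbc pi X)) =>
              (exist _ (fmor k (fst (proj1_sig (u : pbmor pi X))), snd (proj1_sig (u : pbmor pi X))) _
                : mor (pbc pi X')) |}.
  Unshelve.
  4: { simpl. destruct hk as [h1 _]. rewrite <- (proj2_sig x). apply (h1 _). }
  4: { simpl. destruct hk as [_ h2]. rewrite <- (proj2_sig u). apply (h2 _). }
  - intro f. apply pbob_eq; simpl. rewrite fdom. reflexivity.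
  - intro f. apply pbob_eq; simpl. rewrite fcod. reflexivity.
  - intros f g p p'. apply pbmor_eq; simpl. f_equal.
    + apply fcomp.
    + apply comp_pi.
Defined.

(* (1)  pi is exponentiable in Semicat/B: the functor  - x_B E  on Semicat/B
   has a right adjoint.  Stated via the (equivalent, by definition of
   adjunction through universal arrows) condition that every object Y of
   Semicat/B has a couniversal arrow  eps : R x_B E -> Y  from the functor. *)
Definition exponentiable {B E : semicat} (pi : semifunctor E B) : Prop :=
  forall Y : sobj B,
    exists (R : sobj B) (eps : semifunctor (pbc pi R) (carrier Y)),
      over (pbobj pi R) Y eps /\
      forall (X : sobj B) (h : semifunctor (pbc pi X) (carrier Y)),
        over (pbobj pi X) Y h ->
        exists (h' : semifunctor (carrier X) (carrier R)) (hh' : over X R h'),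
          sfeq (sfcomp (pbmap pi h' hh') eps) h /\
          forall (h'' : semifunctor (carrier X) (carrier R)) (hh'' : over X R h''),
            sfeq (sfcomp (pbmap pi h'' hh'') eps) h -> sfeq h'' h'.

(* The virtual double category Span (sets = types).                    *)
Record span (X Y : Type) := { apex : Type; lleg : apex -> X; rleg : apex -> Y }.
Arguments apex {X Y} _.
Arguments lleg {X Y} _ _.
Arguments rleg {X Y} _ _.
Arguments Build_span {X Y} _ _ _.

Inductive spath : Type -> Type -> Type :=
| snil : forall X : Type, spath X X
| scons : forall (X Y Z : Type), span X Y -> spath Y Z -> spath X Z.
Arguments scons {X Y Z} _ _.

Fixpoint sapp {X Y Z : Type} (p : spath X Y) : spath Y Z -> spath X Z :=
  match p in spath X Y return spath Y Z -> spath X Z with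
  | snil _ => fun q => q
  | scons Sp p' => fun q => scons Sp (sapp p' q)
  end.

(* The iterated pullback  S1 x_{X1} ... x_{X(n-1)} Sn  of a path, as a span
   from X0 to Xn (its elements are composable tuples; for the empty path
   at X it is X itself, with identity legs). *)
Fixpoint pb {X Z : Type} (p : spath X Z) : span X Z :=
  match p in spath X Z return span X Z with
  | snil X => Build_span X (fun x => x) (fun x => x)
  | scons Sp q =>
      Build_span {st : apex Sp * apex (pb q) | rleg Sp (fst st) = lleg (pb q) (snd st)}
                 (fun st => lleg Sp (fst (proj1_sig st)))
                 (fun st => rleg (pb q) (snd (proj1_sig st)))
  end.

(* A multicell of Span from the path p : X0 -|-> Xn to the span T : Y0 -|-> Y1
   with tight sides u : X0 -> Y0 and v : Xn -> Y1 *)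
Definition is_cell {X Z X' Z' : Type} (p : spath X Z) (T : span X' Z')
  (u : X -> X') (v : Z -> Z') (b : apex (pb p) -> apex T) : Prop :=
  forall x, lleg T (b x) = u (lleg (pb p) x) /\ rleg T (b x) = v (rleg (pb p) x).

Definition psplit : forall {X Y : Type} (p : spath X Y) {Z : Type} (q : spath Y Z)
  (e : apex (pb (sapp p q))),
  { ac : apex (pb p) * apex (pb q) |
      rleg (pb p) (fst ac) = lleg (pb q) (snd ac) /\
      lleg (pb p) (fst ac) = lleg (pb (sapp p q)) e /\
      rleg (pb q) (snd ac) = rleg (pb (sapp p q)) e }.
Proof.
  intros X Y p. induction p as [X | X Y W Sp p IH]; intros Z q e.
  - exists (lleg (pb q) e, e). simpl. auto.
  - simpl in e. destruct e as [[s e'] h]. simpl in h.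
    destruct (IH Z q e') as [[a c] [h1 [h2 h3]]]. simpl in *.
    refine (exist _ (exist _ (s, a) _, c) _).
    simpl. split; [exact h1 | split; [reflexivity | exact h3]].
    Unshelve. simpl. rewrite h2. exact h.
Defined.

(* the whiskered composite  (id_{chi0}, alpha, id_{chi1})  of Span, acting on
   tuples: it replaces the middle segment (over phi) by its image under alpha *)
Definition whisker {X Y : Type} (phi : spath X Y) (T : span X Y)
  (c : apex (pb phi) -> apex T) (hc : is_cell phi T (fun x => x) (fun y => y) c) :
  forall {W : Type} (chi0 : spath W X) {Z : Type} (chi1 : spath Y Z)
    (e : apex (pb (sapp chi0 (sapp phi chi1)))),
    { e' : apex (pb (sapp chi0 (scons T chi1))) |
        lleg (pb (sapp chi0 (scons T chi1))) e' = lleg (pb (sapp chi0 (sapp phi chi1))) e /\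
        rleg (pb (sapp chi0 (scons T chi1))) e' = rleg (pb (sapp chi0 (sapp phi chi1))) e }.
Proof.
  intros W chi0. induction chi0 as [W | W V X' Sp chi0 IH]; intros Z chi1 e.
  - simpl in *. destruct (psplit phi chi1 e) as [[a c1] [h1 [h2 h3]]]. simpl in *.
    destruct (hc a) as [hl hr].
    refine (exist _ (exist _ (c a, c1) _) _).
    simpl. split; [rewrite hl; exact h2 | exact h3].
    Unshelve. simpl. rewrite hr. exact h1.
  - simpl in e. destruct e as [[s e1] h]. simpl in h.
    destruct (IH phi T c hc Z chi1 e1) as [e1' [hl hr]].
    refine (exist _ (exist _ (s, e1') _) _).
    simpl. split; [reflexivity | exact hr].
    Unshelve. exact (eq_trans h (eq_sym hl)).
Defined.

Definition span_opcartesian {X Y : Type} (phi : spath X Y) (T : span X Y)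
  (c : apex (pb phi) -> apex T) (hc : is_cell phi T (fun x => x) (fun y => y) c) : Prop :=
  forall (W : Type) (chi0 : spath W X) (Z : Type) (chi1 : spath Y Z)
         (W' Z' : Type) (R : span W' Z') (u : W -> W') (v : Z -> Z')
         (b : apex (pb (sapp chi0 (sapp phi chi1))) -> apex R),
    is_cell (sapp chi0 (sapp phi chi1)) R u v b ->
    exists b' : apex (pb (sapp chi0 (scons T chi1))) -> apex R,
      is_cell (sapp chi0 (scons T chi1)) R u v b' /\
      (forall e, b e = b' (proj1_sig (whisker phi T c hc chi0 chi1 e))) /\
      (forall b'' : apex (pb (sapp chi0 (scons T chi1))) -> apex R,
          is_cell (sapp chi0 (scons T chi1)) R u v b'' ->
          (forall e, b e = b'' (proj1_sig (whisker phi T c hc chi0 chi1 e))) ->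
          forall e', b'' e' = b' e').

Inductive lcomp_rel (B : semicat) : list (mor B) -> mor B -> Prop :=
| lcomp_one : forall f, lcomp_rel B [f] f
| lcomp_cons : forall f l g (p : cod f = dom g),
    lcomp_rel B l g -> lcomp_rel B (f :: l) (comp f g p).
Arguments lcomp_rel {B} _ _.

(* The virtual double category L(B).  Loose arrows x -|-> y are the     *)
(* morphisms f of B with dom f = x, cod f = y; loose paths:             *)
Inductive bpath (B : semicat) : ob B -> ob B -> Type :=
| bnil : forall x, bpath B x x
| bcons : forall x y z (f : mor B), dom f = x -> cod f = y -> bpath B y z -> bpath B x z.
Arguments bnil {B} x.
Arguments bcons {B x y z} f _ _ _.

Fixpoint blist {B : semicat} {x y : ob B} (p : bpath B x y) : list (mor B) :=
  match p with
  | bnil _ => []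
  | bcons f _ _ q => f :: blist q
  end.

Fixpoint bapp {B : semicat} {x y z : ob B} (p : bpath B x y) : bpath B y z -> bpath B x z :=
  match p in bpath _ x y return bpath B y z -> bpath B x z with
  | bnil _ => fun q => q
  | bcons f hd hc p' => fun q => bcons f hd hc (bapp p' q)
  end.

(* The multicells of L(B) are globular and unique: there is a (unique)
   multicell from the path p to g iff p is non-empty and g is its composite.
   Multicells are therefore represented by proofs of this proposition. *)
Definition LCell {B : semicat} {x y : ob B} (p : bpath B x y) (g : mor B) : Prop :=
  lcomp_rel (blist p) g.

(* Opcartesian multicells of L(B) (the defining factorisation is unique
   automatically, since L(B) has at most one multicell with given boundary). *)
Definition L_opcartesian {B : semicat} {x y : ob B} (p : bpath B x y) (g : mor B)
  (hd : dom g = x) (hc : cod g = y) : Prop :=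
  forall (w z : ob B) (chi0 : bpath B w x) (chi1 : bpath B y z) (rho : mor B),
    dom rho = w -> cod rho = z ->
    LCell (bapp chi0 (bapp p chi1)) rho -> LCell (bapp chi0 (bcons g hd hc chi1)) rho.

Section Nabla.
Variables (B E : semicat) (pi : semifunctor E B).

Definition fib (b : ob B) : Type := { e : ob E | fob pi e = b }.

Definition nabla_span (f : mor B) (x y : ob B) (hd : dom f = x) (hc : cod f = y)
  : span (fib x) (fib y) :=
  Build_span { m : mor E | fmor pi m = f }
    (fun m => exist _ (dom (proj1_sig m))
                (eq_trans (eq_sym (fdom pi (proj1_sig m)))
                          (eq_trans (f_equal dom (proj2_sig m)) hd)) : fib x)
    (fun m => exist _ (cod (proj1_sig m))
                (eq_trans (eq_sym (fcod pi (proj1_sig m)))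
                          (eq_trans (f_equal cod (proj2_sig m)) hc)) : fib y).

Fixpoint nablap {x y : ob B} (p : bpath B x y) : spath (fib x) (fib y) :=
  match p in bpath _ x y return spath (fib x) (fib y) with
  | bnil x => snil (fib x)
  | bcons f hd hc q => scons (nabla_span f _ _ hd hc) (nablap q)
  end.

Fixpoint tuplist {x y : ob B} (p : bpath B x y) : apex (pb (nablap p)) -> list (mor E) :=
  match p in bpath _ x y return apex (pb (nablap p)) -> list (mor E) with
  | bnil _ => fun _ => []
  | bcons f hd hc q => fun t =>
      proj1_sig (fst (proj1_sig t)) :: tuplist q (snd (proj1_sig t))
  end.
End Nabla.
Arguments fib {B E} pi b.
Arguments nabla_span {B E} pi f x y hd hc.
Arguments nablap {B E} pi {x y} p.
Arguments tuplist {B E} pi {x y} p _.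

(* (2)  nabla pi preserves opcartesian multicells: for every opcartesian
   multicell alpha : p => g of L(B), its image nabla pi (alpha) -- the map of
   spans given by composition in E -- is opcartesian in Span. *)
Definition nabla_preserves_opcartesian {B E : semicat} (pi : semifunctor E B) : Prop :=
  forall (x y : ob B) (p : bpath B x y) (g : mor B) (hd : dom g = x) (hc : cod g = y),
    LCell p g -> L_opcartesian p g hd hc ->
    exists (c : apex (pb (nablap pi p)) -> apex (nabla_span pi g x y hd hc))
           (hcell : is_cell (nablap pi p) (nabla_span pi g x y hd hc)
                      (fun a => a) (fun a => a) c),
      (forall t, lcomp_rel (tuplist pi p t) (proj1_sig (c t))) /\
      span_opcartesian (nablap pi p) (nabla_span pi g x y hd hc) c hcell.

Definition unique_lifting_nary {B E : semicat} (pi : semifunctor E B) : Prop :=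
  forall (f : mor E) (gs : list (mor B)),
    2 <= length gs -> lcomp_rel gs (fmor pi f) ->
    exists! fs : list (mor E), map (fmor pi) fs = gs /\ lcomp_rel fs f.

Definition unique_lifting_binary {B E : semicat} (pi : semifunctor E B) : Prop :=
  forall (f : mor E) (g1 g2 : mor B) (p : cod g1 = dom g2),
    comp g1 g2 p = fmor pi f ->
    exists! fs : mor E * mor E,
      fmor pi (fst fs) = g1 /\ fmor pi (snd fs) = g2 /\
      exists q : cod (fst fs) = dom (snd fs), comp (fst fs) (snd fs) q = f.

(* Main.v *)
Require Import Defs.
From Stdlib Require Import List ProofIrrelevance Classical ClassicalEpsilon FunctionalExtensionality PropExtensionality.
Import ListNotations.

Lemma lcomp_nonempty {B : semicat} (l : list (mor B)) h : lcomp_rel l h -> l <> [].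
Proof. intros H; destruct H; discriminate. Qed.

Lemma lcomp_single {B : semicat} (a h : mor B) : lcomp_rel [a] h -> h = a.
Proof.
  intros H; inversion H; subst; auto.
  exfalso; eapply lcomp_nonempty; eauto.
Qed.

Lemma lcomp_cons_inv {B : semicat} (a : mor B) l h : l <> [] -> lcomp_rel (a :: l) h ->
  exists g (p : cod a = dom g), lcomp_rel l g /\ h = comp a g p.
Proof.
  intros Hn H; inversion H; subst. congruence. eauto.
Qed.

Lemma lcomp_det {B : semicat} (l : list (mor B)) h1 h2 :
  lcomp_rel l h1 -> lcomp_rel l h2 -> h1 = h2.
Proof.
  intros H1; revert h2; induction H1; intros h2 H2.
  - symmetry; apply lcomp_single; auto.
  - destruct (lcomp_cons_inv f l h2) as [g' [p' [Hg' ->]]].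
    + eapply lcomp_nonempty; eauto.
    + auto.
    + apply comp_congr; auto.
Qed.

Lemma lcomp_map {B E : semicat} (pi : semifunctor E B) l h :
  lcomp_rel l h -> lcomp_rel (map (fmor pi) l) (fmor pi h).
Proof.
  induction 1; simpl.
  - constructor.
  - assert (p' : cod (fmor pi f) = dom (fmor pi g)) by (rewrite fcod, fdom, p; reflexivity).
    rewrite (fcomp pi f g p p'). constructor; auto.
Qed.

Lemma lift_all {B E : semicat} (pi : semifunctor E B) :
  unique_lifting_binary pi ->
  forall gs f, gs <> [] -> lcomp_rel gs (fmor pi f) ->
    exists! fs : list (mor E), map (fmor pi) fs = gs /\ lcomp_rel fs f.
Proof.
  intros H4 gs. induction gs as [|g1 gs IH]; intros f Hn Hc; [congruence|].
  destruct gs as [|g2 gs].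
  - apply lcomp_single in Hc. exists [f]. split.
    + split; [simpl; rewrite Hc; auto | constructor].
    + intros fs [Hm Hl]. destruct fs as [|a [|b fs]]; try discriminate.
      apply lcomp_single in Hl; subst; auto.
  - destruct (lcomp_cons_inv g1 (g2 :: gs) _ ltac:(discriminate) Hc) as [G [p [HG Heq]]].
    destruct (H4 f g1 G p (eq_sym Heq)) as [[f1 f2] [[E1 [E2 [q Eq]]] U]].
    simpl in *. subst G.
    destruct (IH f2 ltac:(discriminate) HG) as [fs' [[Hm Hl] U']].
    exists (f1 :: fs'). split.
    + split; [simpl; rewrite E1, Hm; auto|]. rewrite <- Eq. constructor; auto.
    + intros fs [Hm2 Hl2]. destruct fs as [|x xs]; try discriminate.
      simpl in Hm2. injection Hm2 as Hx Hxs.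
      destruct (lcomp_cons_inv x xs f) as [X [q' [HX EX]]]; auto.
      { intro; subst xs; discriminate. }
      assert (HpX : fmor pi X = fmor pi f2).
      { eapply lcomp_det. apply lcomp_map; eauto. rewrite Hxs; auto. }
      assert (Hu := U (x, X)). simpl in Hu.
      assert (Hxx : (f1, f2) = (x, X)) by (apply Hu; split; [auto | split; [congruence | exists q'; auto]]).
      injection Hxx as <- <-. f_equal. apply U'. split; auto.
Qed.

Lemma part34 {B E : semicat} (pi : semifunctor E B) :
  unique_lifting_nary pi <-> unique_lifting_binary pi.
Proof.
  split.
  - intros H3 f g1 g2 p Hc.
    assert (Hl : lcomp_rel [g1; g2] (fmor pi f)) by (rewrite <- Hc; repeat constructor).
    destruct (H3 f [g1; g2] ltac:(simpl; auto) Hl) as [fs [[Hm Hf] U]].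
    destruct fs as [|f1 [|f2 [|]]]; try discriminate.
    simpl in Hm. injection Hm as E1 E2.
    destruct (lcomp_cons_inv f1 [f2] f ltac:(discriminate) Hf) as [G [q [HG ->]]].
    apply lcomp_single in HG; subst G.
    exists (f1, f2). split.
    + simpl; split; auto; split; auto; exists q; auto.
    + intros [a b] [Ea [Eb [q' Eq]]]. simpl in *.
      assert (Hab : [f1; f2] = [a; b]).
      { apply U. split; [simpl; rewrite Ea, Eb; auto|]. rewrite <- Eq. repeat constructor. }
      injection Hab as -> ->; auto.
  - intros H4 f gs Hlen Hc. apply lift_all; auto.
    intros ->; simpl in Hlen; inversion Hlen.
Qed.

Definition pjoin : forall {X Y : Type} (p : spath X Y) {Z : Type} (q : spath Y Z)
  (a : apex (pb p)) (c : apex (pb q)), rleg (pb p) a = lleg (pb q) c ->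
  { e : apex (pb (sapp p q)) |
      lleg (pb (sapp p q)) e = lleg (pb p) a /\ rleg (pb (sapp p q)) e = rleg (pb q) c }.
Proof.
  intros X Y p. induction p as [X | X Y W Sp p IH]; intros Z q a c h.
  - simpl in *. exists c. auto.
  - simpl in a. destruct a as [[s a'] ha]. simpl in h, ha.
    destruct (IH Z q a' c h) as [e' [hl hr]].
    refine (exist _ (exist _ (s, e') _) _). simpl. auto.
    Unshelve. exact (eq_trans ha (eq_sym hl)).
Defined.

Lemma sig_eq {A} {P : A -> Prop} (u v : {x | P x}) : proj1_sig u = proj1_sig v -> u = v.
Proof. destruct u, v; simpl; intros ->; f_equal; apply proof_irrelevance. Qed.

Lemma psplit_pjoin {X Y : Type} (p : spath X Y) {Z : Type} (q : spath Y Z) a c h :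
  proj1_sig (psplit p q (proj1_sig (pjoin p q a c h))) = (a, c).
Proof.
  revert Z q a c h. induction p as [X | X Y W Sp p IH]; intros Z q a c h.
  - simpl in *. subst a. reflexivity.
  - simpl in a. destruct a as [[s a'] ha]. simpl in h, ha. simpl.
    specialize (IH Z q a' c h).
    destruct (pjoin p q a' c h) as [e' [hl hr]]. simpl in *.
    destruct (psplit p q e') as [[a1 c1] H1]. simpl in *.
    injection IH as -> ->. destruct H1 as [? [? ?]]. simpl. f_equal. apply sig_eq. reflexivity.
Qed.

Lemma pjoin_psplit {X Y : Type} (p : spath X Y) {Z : Type} (q : spath Y Z) e a c h :
  proj1_sig (psplit p q e) = (a, c) -> proj1_sig (pjoin p q a c h) = e.
Proof.
  revert Z q e a c h. induction p as [X | X Y W Sp p IH]; intros Z q e a c h Hs.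
  - simpl in *. injection Hs as _ ->. reflexivity.
  - simpl in e. destruct e as [[s e1] he].
    simpl in Hs.
    pose proof (IH Z q e1) as IH1.
    destruct (psplit p q e1) as [[a1 c1] [H1 [H2 H3]]]. simpl in Hs.
    injection Hs as <- <-. simpl in h.
    specialize (IH1 a1 c1 h eq_refl). simpl.
    destruct (pjoin p q a1 c1 h) as [e' [hl hr]]. simpl in *.
    apply sig_eq. simpl. subst e'. reflexivity.
Qed.

Lemma whisker_nil {X Y : Type} (phi : spath X Y) (T : span X Y) c hc {Z : Type} (chi1 : spath Y Z) e :
  fst (proj1_sig (proj1_sig (whisker phi T c hc (snil X) chi1 e))) = c (fst (proj1_sig (psplit phi chi1 e))) /\
  snd (proj1_sig (proj1_sig (whisker phi T c hc (snil X) chi1 e))) = snd (proj1_sig (psplit phi chi1 e)).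
Proof.
  simpl. destruct (psplit phi chi1 e) as [[a c1] [h1 [h2 h3]]]. simpl.
  destruct (hc a). simpl. auto.
Qed.

Lemma whisker_cons {X Y : Type} (phi : spath X Y) (T : span X Y) c hc {W V : Type} (Sp : span W V)
  (chi0 : spath V X) {Z : Type} (chi1 : spath Y Z) e :
  fst (proj1_sig (proj1_sig (whisker phi T c hc (scons Sp chi0) chi1 e))) = fst (proj1_sig e) /\
  snd (proj1_sig (proj1_sig (whisker phi T c hc (scons Sp chi0) chi1 e))) =
    proj1_sig (whisker phi T c hc chi0 chi1 (snd (proj1_sig e))).
Proof.
  destruct e as [[s e1] h]. simpl.
  destruct (whisker phi T c hc chi0 chi1 e1) as [e1' [hl hr]]. simpl. auto.
Qed.

Lemma whisker_inj {W X : Type} (chi0 : spath W X) : forall {Y : Type} (phi : spath X Y) (T : span X Y) c hc,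
  (forall a1 a2, c a1 = c a2 -> a1 = a2) ->
  forall {Z} (chi1 : spath Y Z) e1 e2,
  proj1_sig (whisker phi T c hc chi0 chi1 e1) = proj1_sig (whisker phi T c hc chi0 chi1 e2) -> e1 = e2.
Proof.
  induction chi0 as [X | W V X Sp chi0 IH]; intros Y phi T c hc Hinj Z chi1 e1 e2 Heq.
  - destruct (whisker_nil phi T c hc chi1 e1) as [A1 B1].
    destruct (whisker_nil phi T c hc chi1 e2) as [A2 B2].
    rewrite Heq in A1, B1. rewrite A1 in A2. rewrite B1 in B2.
    apply Hinj in A2.
    assert (HP : proj1_sig (psplit phi chi1 e1) = proj1_sig (psplit phi chi1 e2)).
    { destruct (proj1_sig (psplit phi chi1 e1)), (proj1_sig (psplit phi chi1 e2)); simpl in *; congruence. }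
    destruct (proj2_sig (psplit phi chi1 e2)) as [h _].
    rewrite <- (pjoin_psplit phi chi1 e1 _ _ h), <- (pjoin_psplit phi chi1 e2 _ _ h);
      [reflexivity | | rewrite HP]; destruct (proj1_sig (psplit phi chi1 e2)); reflexivity.
  - destruct (whisker_cons phi T c hc Sp chi0 chi1 e1) as [A1 B1].
    destruct (whisker_cons phi T c hc Sp chi0 chi1 e2) as [A2 B2].
    rewrite Heq in A1, B1. rewrite A1 in A2. rewrite B1 in B2.
    apply IH in B2; auto.
    apply sig_eq. destruct (proj1_sig e1), (proj1_sig e2). simpl in *. congruence.
Qed.

Lemma whisker_surj {W X : Type} (chi0 : spath W X) : forall {Y : Type} (phi : spath X Y) (T : span X Y) c hc,
  (forall t, exists a, c a = t) ->
  forall {Z} (chi1 : spath Y Z) e',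
  exists e, proj1_sig (whisker phi T c hc chi0 chi1 e) = e'.
Proof.
  induction chi0 as [X | W V X Sp chi0 IH]; intros Y phi T c hc Hsur Z chi1 e'.
  - simpl in e'. destruct e' as [[t d] ht]. simpl in ht.
    destruct (Hsur t) as [a <-].
    assert (h : rleg (pb phi) a = lleg (pb chi1) d) by (rewrite <- ht; symmetry; apply (hc a)).
    exists (proj1_sig (pjoin phi chi1 a d h)).
    destruct (whisker_nil phi T c hc chi1 (proj1_sig (pjoin phi chi1 a d h))) as [A B].
    rewrite psplit_pjoin in A, B.
    apply sig_eq.
    remember (proj1_sig (proj1_sig (whisker phi T c hc (snil X) chi1 (proj1_sig (pjoin phi chi1 a d h))))) as w eqn:Ew.
    clear Ew. destruct w. simpl in *. rewrite A, B; reflexivity.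
  - simpl in e'. destruct e' as [[s e1'] h']. simpl in h'.
    destruct (IH Y phi T c hc Hsur Z chi1 e1') as [e1 He1].
    assert (h : rleg Sp s = lleg (pb (sapp chi0 (sapp phi chi1))) e1).
    { rewrite h'. rewrite <- He1. apply (proj2_sig (whisker phi T c hc chi0 chi1 e1)). }
    exists (exist _ (s, e1) h : apex (pb (sapp (scons Sp chi0) (sapp phi chi1)))).
    destruct (whisker_cons phi T c hc Sp chi0 chi1 (exist _ (s, e1) h)) as [A B].
    apply sig_eq.
    remember (proj1_sig (proj1_sig (whisker phi T c hc (scons Sp chi0) chi1 (exist _ (s, e1) h : apex (pb (sapp (scons Sp chi0) (sapp phi chi1))))))) as w eqn:Ew.
    clear Ew. destruct w. simpl in *. rewrite A, B, He1; reflexivity.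
Qed.

Lemma opcart_of_bij {X Y : Type} (phi : spath X Y) (T : span X Y) c hc :
  (forall a1 a2, c a1 = c a2 -> a1 = a2) -> (forall t, exists a, c a = t) ->
  span_opcartesian phi T c hc.
Proof.
  intros Hi Hs W chi0 Z chi1 W' Z' R u v b hb.
  set (Wf := fun e => proj1_sig (whisker phi T c hc chi0 chi1 e)).
  assert (Hsw := whisker_surj chi0 phi T c hc Hs chi1).
  assert (Hiw := whisker_inj chi0 phi T c hc Hi chi1).
  set (inv := fun e' => proj1_sig (constructive_indefinite_description _ (Hsw e'))).
  assert (Hinv : forall e', Wf (inv e') = e').
  { intro e'. unfold inv. destruct (constructive_indefinite_description _ (Hsw e')). auto. }
  assert (Hinv2 : forall e, inv (Wf e) = e).
  { intro e. apply Hiw. apply (Hinv (Wf e)). }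
  exists (fun e' => b (inv e')). split; [|split].
  - intro e'. destruct (hb (inv e')) as [h1 h2].
    destruct (proj2_sig (whisker phi T c hc chi0 chi1 (inv e'))) as [k1 k2].
    fold (Wf (inv e')) in k1, k2. rewrite Hinv in k1, k2.
    rewrite h1, h2, k1, k2. auto.
  - intro e. fold (Wf e). rewrite Hinv2. reflexivity.
  - intros b'' _ Hb'' e'. rewrite <- (Hinv e'). unfold Wf at 1. rewrite <- (Hb'' (inv e')). fold (Wf (inv e')). rewrite Hinv2. reflexivity.

Qed.

Lemma bij_of_opcart {X Y : Type} (phi : spath X Y) (T : span X Y) c hc :
  span_opcartesian phi T c hc ->
  (forall a1 a2, c a1 = c a2 -> a1 = a2) /\ (forall t, exists a, c a = t).
Proof.
  intros Hop. split.
  - intros a1 a2 Hc.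
    assert (Hr : rleg (pb phi) a1 = rleg (pb phi) a2).
    { destruct (hc a1) as [_ r1]. destruct (hc a2) as [_ r2]. rewrite <- r1, <- r2, Hc. reflexivity. }
    set (e1 := proj1_sig (pjoin phi (snil Y) a1 (rleg (pb phi) a1) eq_refl)).
    set (e2 := proj1_sig (pjoin phi (snil Y) a2 (rleg (pb phi) a2) eq_refl)).
    assert (HW : proj1_sig (whisker phi T c hc (snil X) (snil Y) e1) =
                 proj1_sig (whisker phi T c hc (snil X) (snil Y) e2)).
    { destruct (whisker_nil phi T c hc (snil Y) e1) as [A1 B1].
      destruct (whisker_nil phi T c hc (snil Y) e2) as [A2 B2].
      unfold e1, e2 in *. rewrite psplit_pjoin in A1, B1, A2, B2.
      apply sig_eq.
      remember (proj1_sig (proj1_sig (whisker phi T c hc (snil X) (snil Y) (proj1_sig (pjoin phi (snil Y) a1 (rleg (pb phi) a1) eq_refl))))) as w1 eqn:Ew1.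
      remember (proj1_sig (proj1_sig (whisker phi T c hc (snil X) (snil Y) (proj1_sig (pjoin phi (snil Y) a2 (rleg (pb phi) a2) eq_refl))))) as w2 eqn:Ew2.
      clear Ew1 Ew2. destruct w1, w2. simpl in *. rewrite A1, B1, A2, B2, Hc, Hr. reflexivity. }
    destruct (Hop X (snil X) Y (snil Y) X Y (pb (sapp phi (snil Y))) (fun x => x) (fun y => y)
                  (fun e => e) (fun e => conj eq_refl eq_refl)) as [b' [_ [Hb' _]]].
    assert (He : e1 = e2) by (rewrite (Hb' e1), (Hb' e2), HW; reflexivity).
    assert (P1 := psplit_pjoin phi (snil Y) a1 (rleg (pb phi) a1) eq_refl).
    assert (P2 := psplit_pjoin phi (snil Y) a2 (rleg (pb phi) a2) eq_refl).
    fold e1 in P1. fold e2 in P2. rewrite He, P2 in P1. congruence.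
  - intro t.
    set (R := Build_span (X := unit) (Y := unit) bool (fun _ => tt) (fun _ => tt)).
    destruct (Hop X (snil X) Y (snil Y) unit unit R (fun _ => tt) (fun _ => tt)
                  (fun _ => true) (fun _ => conj eq_refl eq_refl)) as [b' [_ [_ U]]].
    set (img := fun e' => exists e, proj1_sig (whisker phi T c hc (snil X) (snil Y) e) = e').
    set (b'' := fun e' => if excluded_middle_informative (img e') then true else false).
    assert (U1 := U b'' (fun _ => conj eq_refl eq_refl)).
    assert (U2 := U (fun _ => true) (fun _ => conj eq_refl eq_refl) (fun _ => eq_refl)).
    assert (Hall : forall e', img e').
    { intro e'. assert (Q : b'' e' = true).
      { rewrite U1, <- U2; auto. intro e. unfold b''.
        destruct (excluded_middle_informative _) as [_|n]; auto. exfalso; apply n; exists e; auto. }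
      unfold b'' in Q. destruct (excluded_middle_informative _); auto; discriminate. }
    destruct (Hall (exist _ (t, rleg T t) eq_refl : apex (pb (scons T (snil Y))))) as [e He].
    exists (fst (proj1_sig (psplit phi (snil Y) e))).
    destruct (whisker_nil phi T c hc (snil Y) e) as [A _].
    rewrite <- A, He. reflexivity.
Qed.

Lemma blist_app {B : semicat} {x y z : ob B} (a : bpath B x y) (b : bpath B y z) :
  blist (bapp a b) = blist a ++ blist b.
Proof. induction a; simpl; congruence. Qed.

Lemma lcomp_L1 {B : semicat} (l l1 : list (mor B)) r g :
  lcomp_rel (l ++ l1) r -> lcomp_rel l g -> lcomp_rel (g :: l1) r.
Proof.
  intros H Hg. destruct l1 as [|b l1].
  - rewrite app_nil_r in H. rewrite (lcomp_det _ _ _ H Hg). constructor.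
  - revert r g H Hg. induction l as [|a l IH]; intros r g H Hg.
    + inversion Hg.
    + destruct l as [|a' l].
      * apply lcomp_single in Hg. subst. exact H.
      * destruct (lcomp_cons_inv a (a' :: l) g ltac:(discriminate) Hg) as [G [p [HG ->]]].
        destruct (lcomp_cons_inv a ((a' :: l) ++ b :: l1) r ltac:(discriminate) H) as [H' [q [HH ->]]].
        specialize (IH _ _ HH HG).
        destruct (lcomp_cons_inv G (b :: l1) H' ltac:(discriminate) IH) as [K [s [HK ->]]].
        assert (p' : cod (comp a G p) = dom K) by (rewrite comp_cod; exact s).
        assert (q' : cod a = dom (comp G K s)) by (rewrite comp_dom; exact p).
        rewrite (comp_pi _ a (comp G K s) q q').
        rewrite <- (comp_assoc _ a G K p s p' q').
        constructor; auto.
Qed.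

Lemma lcomp_L2 {B : semicat} (l0 X Y : list (mor B)) r :
  X <> [] -> (forall r', lcomp_rel X r' -> lcomp_rel Y r') ->
  lcomp_rel (l0 ++ X) r -> lcomp_rel (l0 ++ Y) r.
Proof.
  intros HX HXY. revert r. induction l0 as [|a l0 IH]; intros r H; simpl in *; auto.
  destruct (lcomp_cons_inv a (l0 ++ X) r) as [G [p [HG ->]]]; auto.
  { destruct l0; simpl; [auto | discriminate]. }
  constructor; auto.
Qed.

Lemma L_opcart_all {B : semicat} {x y : ob B} (p : bpath B x y) (g : mor B) hd hc :
  LCell p g -> L_opcartesian p g hd hc.
Proof.
  intros Hp w z chi0 chi1 rho _ _ H. unfold LCell in *.
  rewrite blist_app in *. simpl. rewrite blist_app in H.
  eapply lcomp_L2; [| | exact H].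
  - intro E. apply app_eq_nil in E. destruct E as [E _]. rewrite E in Hp. inversion Hp.
  - intros r' Hr. eapply lcomp_L1; eauto.
Qed.

Lemma path_of_lcomp {B : semicat} (gs : list (mor B)) g :
  lcomp_rel gs g -> exists p : bpath B (dom g) (cod g), blist p = gs.
Proof.
  induction 1 as [f | f l g p H [q Hq]].
  - exists (bcons f eq_refl eq_refl (bnil (cod f))). reflexivity.
  - rewrite comp_cod. exists (bcons f (eq_sym (comp_dom _ f g p)) p q). simpl. congruence.
Qed.

Fixpoint chain {E : semicat} (e : ob E) (l : list (mor E)) : Prop :=
  match l with
  | [] => True
  | m :: l' => dom m = e /\ chain (cod m) l'
  end.

Fixpoint chain_end {E : semicat} (e : ob E) (l : list (mor E)) : ob E :=
  match l with
  | [] => e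
  | m :: l' => chain_end (cod m) l'
  end.

Lemma lcomp_chain {E : semicat} (l : list (mor E)) h :
  lcomp_rel l h -> chain (dom h) l /\ cod h = chain_end (dom h) l.
Proof.
  induction 1 as [f | f l g p H [IH1 IH2]]; simpl.
  - auto.
  - rewrite comp_dom, comp_cod, p. auto.
Qed.

Lemma chain_lcomp {E : semicat} (l : list (mor E)) e :
  chain e l -> l <> [] -> exists h, lcomp_rel l h.
Proof.
  revert e. induction l as [|m l IH]; intros e Hc Hn; [congruence|].
  destruct l as [|m' l].
  - exists m. constructor.
  - destruct Hc as [_ Hc]. destruct (IH _ Hc ltac:(discriminate)) as [h Hh].
    destruct (lcomp_chain _ _ Hh) as [[Hd _] _]. simpl in Hc. destruct Hc as [Hc _].
    assert (p : cod m = dom h) by congruence.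
    exists (comp m h p). constructor; auto.
Qed.

Section Tup.
Context {B E : semicat} (pi : semifunctor E B).

Lemma tuplist_map {x y : ob B} (p : bpath B x y) t :
  map (fmor pi) (tuplist pi p t) = blist p.
Proof.
  induction p as [x | x y z f hd hc q IH]; simpl; auto.
  destruct t as [[[m pm] t'] h]. simpl. rewrite pm, IH. reflexivity.
Qed.

Lemma tuplist_chain {x y : ob B} (p : bpath B x y) t :
  chain (proj1_sig (lleg (pb (nablap pi p)) t)) (tuplist pi p t) /\
  proj1_sig (rleg (pb (nablap pi p)) t) = chain_end (proj1_sig (lleg (pb (nablap pi p)) t)) (tuplist pi p t).
Proof.
  induction p as [x | x y z f hd hc q IH]; simpl; auto.
  destruct t as [[[m pm] t'] h]. simpl in *. 
  destruct (IH t') as [I1 I2].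
  assert (Hc : cod m = proj1_sig (lleg (pb (nablap pi q)) t')) by (rewrite <- h; reflexivity).
  rewrite <- Hc in I1, I2. auto.
Qed.

Lemma tuple_of_list {x y : ob B} (p : bpath B x y) :
  forall fs e (he : fob pi e = x), map (fmor pi) fs = blist p -> chain e fs ->
  exists t, tuplist pi p t = fs /\ proj1_sig (lleg (pb (nablap pi p)) t) = e.
Proof.
  induction p as [x | x y z f hd hc q IH]; intros fs e he Hm Hc.
  - destruct fs; try discriminate. exists (exist _ e he). auto.
  - destruct fs as [|m fs]; try discriminate. simpl in Hm. injection Hm as Hm1 Hm2.
    destruct Hc as [Hd Hc].
    assert (he' : fob pi (cod m) = y) by (rewrite <- fcod, Hm1; exact hc).
    destruct (IH fs (cod m) he' Hm2 Hc) as [t' [T1 T2]].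
    refine (ex_intro _ (exist _ (exist _ m Hm1, t') _) _).
    simpl. split; [congruence | auto].
    Unshelve. apply sig_eq. simpl. auto.
Qed.

Lemma tuplist_inj {x y : ob B} (p : bpath B x y) :
  forall t1 t2, tuplist pi p t1 = tuplist pi p t2 ->
  proj1_sig (lleg (pb (nablap pi p)) t1) = proj1_sig (lleg (pb (nablap pi p)) t2) -> t1 = t2.
Proof.
  induction p as [x | x y z f hd hc q IH]; intros t1 t2 H1 H2.
  - apply sig_eq. exact H2.
  - destruct t1 as [[[m1 pm1] t1'] h1], t2 as [[[m2 pm2] t2'] h2]. simpl in *.
    injection H1 as -> H1.
    assert (pm1 = pm2) by apply proof_irrelevance. subst pm2.
    assert (t1' = t2').
    { apply IH; auto. rewrite <- h1, <- h2. reflexivity. }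
    subst. apply sig_eq. reflexivity.
Qed.
End Tup.

Lemma chain_head {E : semicat} (l : list (mor E)) e1 e2 :
  chain e1 l -> chain e2 l -> l <> [] -> e1 = e2.
Proof. destruct l; simpl; [congruence | intros [A _] [C _] _; congruence]. Qed.

Lemma part23 {B E : semicat} (pi : semifunctor E B) :
  nabla_preserves_opcartesian pi <-> unique_lifting_nary pi.
Proof.
  split.
  - intros H2 f gs Hlen Hc.
    destruct (path_of_lcomp gs _ Hc) as [p Hp].
    assert (HL : LCell p (fmor pi f)) by (unfold LCell; rewrite Hp; exact Hc).
    destruct (H2 _ _ p (fmor pi f) eq_refl eq_refl HL (L_opcart_all p _ _ _ HL))
      as [c [hcell [Htup Hop]]].
    destruct (bij_of_opcart _ _ c hcell Hop) as [Hi Hs].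
    destruct (Hs (exist _ f eq_refl)) as [t Ht].
    exists (tuplist pi p t). split.
    + split; [rewrite tuplist_map; auto|]. specialize (Htup t). rewrite Ht in Htup. exact Htup.
    + intros fs' [Hm Hl].
      destruct (lcomp_chain _ _ Hl) as [Hch _].
      assert (he : fob pi (dom f) = dom (fmor pi f)) by (symmetry; apply fdom).
      destruct (tuple_of_list pi p fs' (dom f) he ltac:(rewrite Hm; auto) Hch) as [t' [Ht' _]].
      assert (Hct : c t' = c t).
      { rewrite Ht. apply sig_eq. simpl. eapply lcomp_det; [apply Htup|]. rewrite Ht'. exact Hl. }
      apply Hi in Hct. subst t'. auto.
  - intros H3. assert (H4 : unique_lifting_binary pi) by (apply part34; auto).
    intros x y p g hd hc HL _.
    assert (Hne : blist p <> []) by (eapply lcomp_nonempty; exact HL).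
    assert (Hex : forall t : apex (pb (nablap pi p)),
               exists h, lcomp_rel (tuplist pi p t) h /\ fmor pi h = g).
    { intro t. destruct (tuplist_chain pi p t) as [Hch _].
      destruct (chain_lcomp _ _ Hch) as [h Hh].
      { intro E0. apply Hne. rewrite <- (tuplist_map pi p t), E0. reflexivity. }
      exists h. split; auto. eapply lcomp_det; [|exact HL].
      rewrite <- (tuplist_map pi p t). apply lcomp_map; auto. }
    set (c := fun t => let H := constructive_indefinite_description _ (Hex t) in
                exist (fun m => fmor pi m = g) (proj1_sig H) (proj2 (proj2_sig H))
                : apex (nabla_span pi g x y hd hc)).
    assert (Hspec : forall t, lcomp_rel (tuplist pi p t) (proj1_sig (c t))).
    { intro t. unfold c. simpl. exact (proj1 (proj2_sig (constructive_indefinite_description _ (Hex t)))). }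
    assert (Hne' : forall t, tuplist pi p t <> []).
    { intros t E0. apply Hne. rewrite <- (tuplist_map pi p t), E0. reflexivity. }
    assert (Hdom : forall t, dom (proj1_sig (c t)) = proj1_sig (lleg (pb (nablap pi p)) t)).
    { intro t. destruct (lcomp_chain _ _ (Hspec t)) as [H1 _].
      eapply chain_head; eauto. apply tuplist_chain. }
    assert (hcell : is_cell (nablap pi p) (nabla_span pi g x y hd hc) (fun a => a) (fun a => a) c).
    { intro t. split; apply sig_eq; simpl.
      - change (dom (proj1_sig (c t)) = proj1_sig (lleg (pb (nablap pi p)) t)). apply Hdom.
      - destruct (lcomp_chain _ _ (Hspec t)) as [_ K2].
        destruct (tuplist_chain pi p t) as [_ K3]. change (cod (proj1_sig (c t)) = proj1_sig (rleg (pb (nablap pi p)) t)). rewrite K2, K3, Hdom. reflexivity. }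
    exists c, hcell. split; auto.
    apply opcart_of_bij.
    + intros t1 t2 Hc. apply tuplist_inj.
      * assert (Hh1 := Hspec t1). assert (Hh2 := Hspec t2). rewrite Hc in Hh1.
        set (h := proj1_sig (c t2)) in *.
        assert (Hg : fmor pi h = g) by apply (proj2_sig (c t2)).
        destruct (lift_all pi H4 (blist p) h Hne ltac:(rewrite Hg; exact HL)) as [fs [_ U]].
        rewrite <- (U _ (conj (tuplist_map pi p t1) Hh1)).
        apply U. split; auto. apply tuplist_map.
      * rewrite <- !Hdom, Hc. reflexivity.
    + intros [m pm].
      destruct (lift_all pi H4 (blist p) m Hne ltac:(rewrite pm; exact HL)) as [fs [[Hm Hl] _]].
      destruct (lcomp_chain _ _ Hl) as [Hch _].
      assert (he : fob pi (dom m) = x) by (rewrite <- fdom, pm; exact hd).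
      destruct (tuple_of_list pi p fs (dom m) he Hm Hch) as [t [Ht _]].
      exists t. apply sig_eq. simpl. eapply lcomp_det; [apply Hspec|]. rewrite Ht; exact Hl.
Qed.

Section Expo.
Context {B E : semicat} (pi : semifunctor E B) (H4 : unique_lifting_binary pi) (Y : sobj B).
Local Notation Yc := (carrier Y).
Local Notation py := (sproj Y).

Definition RobOK (b : ob B) (rho : ob E -> ob Yc -> Prop) : Prop :=
  (forall e, fob pi e = b -> exists! y, rho e y) /\
  (forall e y, rho e y -> fob pi e = b /\ fob py y = b).

Definition Rob : Type := { bp : ob B * (ob E -> ob Yc -> Prop) | RobOK (fst bp) (snd bp) }.
Definition Rb (r : Rob) : ob B := fst (proj1_sig r).
Definition Rrel (r : Rob) : ob E -> ob Yc -> Prop := snd (proj1_sig r).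

Lemma Rrel_fun (r : Rob) e y1 y2 : Rrel r e y1 -> Rrel r e y2 -> y1 = y2.
Proof.
  intros H1 H2. destruct r as [[b rho] [A C]]. unfold Rrel in *. simpl in *.
  destruct (C e y1 H1) as [Hf _]. destruct (A e Hf) as [y [_ U]].
  rewrite <- (U y1 H1), <- (U y2 H2). reflexivity.
Qed.

Definition RmorOK (f : mor B) (s t : Rob) (Phi : mor E -> mor Yc -> Prop) : Prop :=
  Rb s = dom f /\ Rb t = cod f /\
  (forall m, fmor pi m = f -> exists! y, Phi m y) /\
  (forall m y, Phi m y -> fmor pi m = f /\ fmor py y = f /\ Rrel s (dom m) (dom y) /\ Rrel t (cod m) (cod y)).

Definition Rmor : Type :=
  { d : (mor B * Rob * Rob) * (mor E -> mor Yc -> Prop) |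
      RmorOK (fst (fst (fst d))) (snd (fst (fst d))) (snd (fst d)) (snd d) }.
Definition Rf (k : Rmor) : mor B := fst (fst (fst (proj1_sig k))).
Definition Rdom (k : Rmor) : Rob := snd (fst (fst (proj1_sig k))).
Definition Rcod (k : Rmor) : Rob := snd (fst (proj1_sig k)).
Definition RPhi (k : Rmor) : mor E -> mor Yc -> Prop := snd (proj1_sig k).
Lemma Rok (k : Rmor) : RmorOK (Rf k) (Rdom k) (Rcod k) (RPhi k).
Proof. exact (proj2_sig k). Qed.

Lemma RPhi_fun (k : Rmor) m y1 y2 : RPhi k m y1 -> RPhi k m y2 -> y1 = y2.
Proof.
  intros H1 H2. destruct (Rok k) as [_ [_ [A C]]].
  destruct (C m y1 H1) as [Hf _]. destruct (A m Hf) as [y [_ U]].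
  rewrite <- (U y1 H1), <- (U y2 H2). reflexivity.
Qed.

Definition Xrel (k k' : Rmor) (m : mor E) (y : mor Yc) : Prop :=
  exists m1 m2 (q : cod m1 = dom m2) y1 y2 (q' : cod y1 = dom y2),
    m = comp m1 m2 q /\ y = comp y1 y2 q' /\ RPhi k m1 y1 /\ RPhi k' m2 y2.

Lemma Rcomp_cod_dom (k k' : Rmor) : Rcod k = Rdom k' -> cod (Rf k) = dom (Rf k').
Proof.
  intros H. destruct (Rok k) as [_ [A _]]. destruct (Rok k') as [B1 _].
  rewrite <- A, <- B1, H. reflexivity.
Qed.

Lemma Rcomp_ok (k k' : Rmor) (p : Rcod k = Rdom k') :
  RmorOK (comp (Rf k) (Rf k') (Rcomp_cod_dom k k' p)) (Rdom k) (Rcod k') (Xrel k k').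
Proof.
  destruct (Rok k) as [D1 [C1 [T1 S1]]]. destruct (Rok k') as [D2 [C2 [T2 S2]]].
  split; [rewrite comp_dom; auto|]. split; [rewrite comp_cod; auto|]. split.
  - intros m Hm.
    destruct (H4 m (Rf k) (Rf k') (Rcomp_cod_dom k k' p) (eq_sym Hm)) as [[m1 m2] [[E1 [E2 [q Eq]]] U]].
    simpl in *.
    destruct (T1 m1 E1) as [y1 [Hy1 _]]. destruct (T2 m2 E2) as [y2 [Hy2 _]].
    assert (q' : cod y1 = dom y2).
    { destruct (S1 _ _ Hy1) as [_ [_ [_ R1]]]. destruct (S2 _ _ Hy2) as [_ [_ [R2 _]]].
      rewrite p in R1. rewrite q in R1. eapply Rrel_fun; eauto. }
    exists (comp y1 y2 q'). split.
    + exists m1, m2, q, y1, y2, q'. auto.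
    + intros y [n1 [n2 [r [z1 [z2 [r' [En [Ey [Hz1 Hz2]]]]]]]]].
      destruct (S1 _ _ Hz1) as [F1 _]. destruct (S2 _ _ Hz2) as [F2 _].
      assert (Hn : (m1, m2) = (n1, n2)).
      { apply U. simpl. split; auto. split; auto. exists r. congruence. }
      injection Hn as <- <-.
      rewrite Ey. apply comp_congr; eapply RPhi_fun; eauto.
  - intros m y [m1 [m2 [q [y1 [y2 [q' [-> [-> [Hy1 Hy2]]]]]]]]].
    destruct (S1 _ _ Hy1) as [F1 [G1 [R1 R1']]]. destruct (S2 _ _ Hy2) as [F2 [G2 [R2 R2']]].
    split; [|split; [|split]].
    + assert (q1 : cod (fmor pi m1) = dom (fmor pi m2)) by (rewrite fcod, fdom, q; reflexivity).
      rewrite (fcomp pi m1 m2 q q1). apply comp_congr; auto.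
    + assert (q1 : cod (fmor py y1) = dom (fmor py y2)) by (rewrite fcod, fdom, q'; reflexivity).
      rewrite (fcomp py y1 y2 q' q1). apply comp_congr; auto.
    + rewrite !comp_dom. auto.
    + rewrite !comp_cod. auto.
Qed.

Definition Rcomp (k k' : Rmor) (p : Rcod k = Rdom k') : Rmor :=
  exist _ ((comp (Rf k) (Rf k') (Rcomp_cod_dom k k' p), Rdom k, Rcod k'), Xrel k k') (Rcomp_ok k k' p).

Lemma Rmor_eq (k k' : Rmor) : Rf k = Rf k' -> Rdom k = Rdom k' -> Rcod k = Rcod k' ->
  (forall m y, RPhi k m y <-> RPhi k' m y) -> k = k'.
Proof.
  intros H1 H2 H3 H5. apply sig_eq.
  destruct k as [[[[f s] t] Ph] ok], k' as [[[[f' s'] t'] Ph'] ok'].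
  unfold Rf, Rdom, Rcod, RPhi in *. simpl in *. subst.
  f_equal. apply functional_extensionality; intro m. apply functional_extensionality; intro y.
  apply propositional_extensionality. auto.
Qed.

Lemma Rassoc (k1 k2 k3 : Rmor) (p : Rcod k1 = Rdom k2) (q : Rcod k2 = Rdom k3)
  (p' : Rcod (Rcomp k1 k2 p) = Rdom k3) (q' : Rcod k1 = Rdom (Rcomp k2 k3 q)) :
  Rcomp (Rcomp k1 k2 p) k3 p' = Rcomp k1 (Rcomp k2 k3 q) q'.
Proof.
  apply Rmor_eq; try reflexivity.
  - exact (comp_assoc _ _ _ _ _ _ _ _).
  - intros m y. unfold RPhi. simpl. split.
    + intros [m12 [m3 [r [y12 [y3 [r' [-> [-> [H12 H3]]]]]]]]].
      destruct H12 as [m1 [m2 [s [y1 [y2 [s' [-> [-> [H1 H2]]]]]]]]].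
      assert (t1 : cod m2 = dom m3) by (rewrite <- r, comp_cod; reflexivity).
      assert (t1' : cod y2 = dom y3) by (rewrite <- r', comp_cod; reflexivity).
      assert (t2 : cod m1 = dom (comp m2 m3 t1)) by (rewrite comp_dom; exact s).
      assert (t2' : cod y1 = dom (comp y2 y3 t1')) by (rewrite comp_dom; exact s').
      exists m1, (comp m2 m3 t1), t2, y1, (comp y2 y3 t1'), t2'.
      split; [apply comp_assoc|]. split; [apply comp_assoc|]. split; auto.
      exists m2, m3, t1, y2, y3, t1'. auto.
    + intros [m1 [m23 [r [y1 [y23 [r' [-> [-> [H1 H23]]]]]]]]].
      destruct H23 as [m2 [m3 [s [y2 [y3 [s' [-> [-> [H2 H3]]]]]]]]].
      assert (t1 : cod m1 = dom m2) by (rewrite r, comp_dom; reflexivity).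
      assert (t1' : cod y1 = dom y2) by (rewrite r', comp_dom; reflexivity).
      assert (t2 : cod (comp m1 m2 t1) = dom m3) by (rewrite comp_cod; exact s).
      assert (t2' : cod (comp y1 y2 t1') = dom y3) by (rewrite comp_cod; exact s').
      exists (comp m1 m2 t1), m3, t2, (comp y1 y2 t1'), y3, t2'.
      split; [symmetry; apply comp_assoc|]. split; [symmetry; apply comp_assoc|]. split; auto.
      exists m1, m2, t1, y1, y2, t1'. auto.
Qed.

Definition Rsc : semicat :=
  {| ob := Rob; mor := Rmor; dom := Rdom; cod := Rcod; comp := Rcomp;
     comp_dom := fun _ _ _ => eq_refl; comp_cod := fun _ _ _ => eq_refl;
     comp_assoc := Rassoc |}.

Definition Rproj : semifunctor Rsc B.
Proof.
  refine {| fob := (Rb : ob Rsc -> ob B); fmor := (Rf : mor Rsc -> mor B) |}.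
  - intro k. simpl. symmetry. apply (Rok k).
  - intro k. simpl. symmetry. apply (Rok k).
  - intros k k' p p'. simpl. apply comp_pi.
Defined.

Definition Rsobj : sobj B := Build_sobj Rsc Rproj.

Lemma ex_of_uniq {A} (P : A -> Prop) : (exists! x, P x) -> exists x, P x.
Proof. intros [x [Hx _]]; eauto. Qed.

Definition pickO (r : Rob) (e : ob E) (he : Rb r = fob pi e) : ob Yc :=
  proj1_sig (constructive_indefinite_description _
    (ex_of_uniq _ (proj1 (proj2_sig r) e (eq_sym he)))).

Lemma pickO_spec r e he : Rrel r e (pickO r e he).
Proof. unfold pickO. destruct (constructive_indefinite_description _ _). auto. Qed.

Lemma pickO_uniq r e he y : Rrel r e y -> y = pickO r e he.
Proof. intros H. eapply Rrel_fun; eauto. apply pickO_spec. Qed.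

Definition pickM (k : Rmor) (m : mor E) (hm : Rf k = fmor pi m) : mor Yc :=
  proj1_sig (constructive_indefinite_description _
    (ex_of_uniq _ (proj1 (proj2 (proj2 (Rok k))) m (eq_sym hm)))).

Lemma pickM_spec k m hm : RPhi k m (pickM k m hm).
Proof. unfold pickM. destruct (constructive_indefinite_description _ _). auto. Qed.

Lemma pickM_uniq k m hm y : RPhi k m y -> y = pickM k m hm.
Proof. intros H. eapply RPhi_fun; eauto. apply pickM_spec. Qed.

Definition Reps : semifunctor (pbc pi Rsobj) Yc.
Proof.
  refine {| fob := fun u : ob (pbc pi Rsobj) =>
              pickO (fst (proj1_sig (u : pbob pi Rsobj))) (snd (proj1_sig (u : pbob pi Rsobj)))
                    (proj2_sig (u : pbob pi Rsobj));
            fmor := fun u : mor (pbc pi Rsobj) =>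
              pickM (fst (proj1_sig (u : pbmor pi Rsobj))) (snd (proj1_sig (u : pbmor pi Rsobj)))
                    (proj2_sig (u : pbmor pi Rsobj)) |}.
  - intros [[k m] hm]. simpl. apply pickO_uniq.
    destruct (Rok k) as [_ [_ [_ S]]]. apply (S _ _ (pickM_spec k m hm)).
  - intros [[k m] hm]. simpl. apply pickO_uniq.
    destruct (Rok k) as [_ [_ [_ S]]]. apply (S _ _ (pickM_spec k m hm)).
  - intros [[k m] hm] [[k' m'] hm'] h p'. simpl in *.
    symmetry. apply pickM_uniq. simpl.
    exists m, m', (f_equal (fun o => snd (proj1_sig o)) h), (pickM k m hm), (pickM k' m' hm'), p'.
    split; [reflexivity|]. split; [reflexivity|]. split; apply pickM_spec.
Defined.

Lemma Reps_over : over (pbobj pi Rsobj) Y Reps.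
Proof.
  split.
  - intros [[r e] he]. simpl. destruct (proj2 (proj2_sig r) _ _ (pickO_spec r e he)) as [_ H]. exact H.
  - intros [[k m] hm]. simpl. destruct (Rok k) as [_ [_ [_ S]]].
    destruct (S _ _ (pickM_spec k m hm)) as [_ [H _]]. exact H.
Qed.

Section Univ.
Context (X : sobj B) (h : semifunctor (pbc pi X) Yc) (hh : over (pbobj pi X) Y h).
Local Notation pX := (sproj X).

Definition hrel (x : ob (carrier X)) (e : ob E) (y : ob Yc) : Prop :=
  exists p : fob pX x = fob pi e, y = fob h (exist _ (x, e) p : ob (pbc pi X)).

Lemma hRob_ok x : RobOK (fob pX x) (hrel x).
Proof.
  split.
  - intros e He. exists (fob h (exist _ (x, e) (eq_sym He) : ob (pbc pi X))). split.
    + exists (eq_sym He). reflexivity.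
    + intros y [p ->]. f_equal. apply pbob_eq. reflexivity.
  - intros e y [p ->]. split; [auto|]. destruct hh as [H1 _]. apply (H1 (exist _ (x, e) p : ob (pbc pi X))).
Qed.

Definition hRob x : Rob := exist _ (fob pX x, hrel x) (hRob_ok x).

Definition hPhi (k : mor (carrier X)) (m : mor E) (y : mor Yc) : Prop :=
  exists p : fmor pX k = fmor pi m, y = fmor h (exist _ (k, m) p : mor (pbc pi X)).

Lemma hRmor_ok k : RmorOK (fmor pX k) (hRob (dom k)) (hRob (cod k)) (hPhi k).
Proof.
  split; [symmetry; apply fdom|]. split; [symmetry; apply fcod|]. split.
  - intros m Hm. exists (fmor h (exist _ (k, m) (eq_sym Hm) : mor (pbc pi X))). split.
    + exists (eq_sym Hm). reflexivity.
    + intros y [p ->]. f_equal. apply pbmor_eq. reflexivity.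
  - intros m y [p ->]. split; [auto|]. split.
    + destruct hh as [_ H2]. apply (H2 (exist _ (k, m) p : mor (pbc pi X))).
    + split.
      * unfold Rrel, hRob, hrel; simpl.
        exists (proj2_sig (pbdom _ _ pi X (exist _ (k, m) p))).
        rewrite (fdom h); f_equal; try (apply pbob_eq; reflexivity).
      * unfold Rrel, hRob, hrel; simpl.
        exists (proj2_sig (pbcod _ _ pi X (exist _ (k, m) p))).
        rewrite (fcod h); f_equal; try (apply pbob_eq; reflexivity).
Qed.

Definition hRmor k : Rmor := exist _ ((fmor pX k, hRob (dom k), hRob (cod k)), hPhi k) (hRmor_ok k).

Definition hprime : semifunctor (carrier X) Rsc.
Proof.
  refine {| fob := (hRob : ob (carrier X) -> ob Rsc); fmor := (hRmor : mor (carrier X) -> mor Rsc) |}.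
  - intro k. reflexivity.
  - intro k. reflexivity.
  - intros k k' p p'. apply Rmor_eq.
    + simpl. unfold Rf; simpl. apply fcomp.
    + simpl. unfold Rdom; simpl. rewrite comp_dom. reflexivity.
    + simpl. unfold Rcod; simpl. rewrite comp_cod. reflexivity.
    + intros m y. unfold RPhi; simpl. split.
      * intros [q ->].
        assert (q0 : cod (fmor pX k) = dom (fmor pX k')) by (rewrite fcod, fdom, p; reflexivity).
        assert (q2 : fmor pi m = comp (fmor pX k) (fmor pX k') q0) by (rewrite <- q; apply fcomp).
        destruct (H4 m _ _ q0 (eq_sym q2)) as [[m1 m2] [[E1 [E2 [r Er]]] _]]. simpl in *.
        set (u1 := exist _ (k, m1) (eq_sym E1) : mor (pbc pi X)).
        set (u2 := exist _ (k', m2) (eq_sym E2) : mor (pbc pi X)).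
        assert (huv : pbcod _ _ pi X u1 = pbdom _ _ pi X u2) by (apply pbob_eq; simpl; rewrite p, r; reflexivity).
        assert (r' : cod (fmor h u1) = dom (fmor h u2)) by (rewrite fcod, fdom; f_equal; exact huv).
        exists m1, m2, r, (fmor h u1), (fmor h u2), r'.
        split; [auto|]. split.
        { rewrite <- (fcomp h u1 u2 huv r'). f_equal. apply pbmor_eq. simpl. f_equal.
          - apply comp_pi.
          - rewrite <- Er. apply comp_pi. }
        split; [exists (eq_sym E1) | exists (eq_sym E2)]; reflexivity.
      * intros [m1 [m2 [r [y1 [y2 [r' [-> [-> [[p1 ->] [p2 ->]]]]]]]]]].
        set (u1 := exist _ (k, m1) p1 : mor (pbc pi X)).
        set (u2 := exist _ (k', m2) p2 : mor (pbc pi X)).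
        assert (huv : pbcod _ _ pi X u1 = pbdom _ _ pi X u2) by (apply pbob_eq; simpl; rewrite p, r; reflexivity).
        assert (q0 : fmor pX (comp k k' p) = fmor pi (comp m1 m2 r)).
        { assert (a1 : cod (fmor pX k) = dom (fmor pX k')) by (rewrite fcod, fdom, p; reflexivity).
          assert (a2 : cod (fmor pi m1) = dom (fmor pi m2)) by (rewrite fcod, fdom, r; reflexivity).
          rewrite (fcomp pX k k' p a1), (fcomp pi m1 m2 r a2). apply comp_congr; auto. }
        exists q0. rewrite <- (fcomp h u1 u2 huv r'). f_equal. apply pbmor_eq. simpl. f_equal; apply comp_pi.
Defined.

Lemma hprime_over : over X Rsobj hprime.
Proof. split; intros; reflexivity. Qed.
End Univ.
End Expo.

Lemma Rob_eq {B E : semicat} (pi : semifunctor E B) (Y : sobj B) (r r' : Rob pi Y) :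
  Rb pi Y r = Rb pi Y r' -> (forall e y, Rrel pi Y r e y <-> Rrel pi Y r' e y) -> r = r'.
Proof.
  intros H1 H2. apply sig_eq. destruct r as [[b rho] ok], r' as [[b' rho'] ok'].
  unfold Rb, Rrel in *. simpl in *. subst. f_equal.
  apply functional_extensionality; intro e. apply functional_extensionality; intro y.
  apply propositional_extensionality. auto.
Qed.

Lemma part41 {B E : semicat} (pi : semifunctor E B) :
  unique_lifting_binary pi -> exponentiable pi.
Proof.
  intros H4 Y. exists (Rsobj pi H4 Y), (Reps pi H4 Y). split; [apply Reps_over|].
  intros X h hh. exists (hprime pi H4 Y X h hh), (hprime_over pi H4 Y X h hh). split.
  - split.
    + intros [[x e] p]. simpl. symmetry. apply pickO_uniq. exists p. reflexivity.
    + intros [[k m] p]. simpl. symmetry. apply pickM_uniq. exists p. reflexivity.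
  - intros h'' hh'' Hs.
    assert (Hob : forall x, fob h'' x = hRob pi Y X h hh x).
    { intro x. apply Rob_eq.
      - apply (proj1 hh'' x).
      - intros e y. unfold Rrel at 2. simpl. unfold hrel. split.
        + intros Hr.
          destruct (proj2 (proj2_sig (fob h'' x)) e y Hr) as [He _].
          assert (p : fob (sproj X) x = fob pi e) by (rewrite <- (proj1 hh'' x); exact (eq_sym He)).
          exists p. pose proof (proj1 Hs (exist _ (x, e) p : ob (pbc pi X))) as Hx. simpl in Hx.
          rewrite <- Hx. apply pickO_uniq. exact Hr.
        + intros [p ->]. pose proof (proj1 Hs (exist _ (x, e) p : ob (pbc pi X))) as Hx. simpl in Hx.
          rewrite <- Hx. apply pickO_spec. }
    split; [exact Hob|].
    intro k. apply Rmor_eq.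
    + apply (proj2 hh'' k).
    + change (dom (fmor h'' k) = fob (hprime pi H4 Y X h hh) (dom k)).
      rewrite fdom. apply Hob.
    + change (cod (fmor h'' k) = fob (hprime pi H4 Y X h hh) (cod k)).
      rewrite fcod. apply Hob.
    + intros m y. unfold RPhi at 2. simpl. unfold hPhi. split.
      * intros Hr.
        destruct (Rok pi Y (fmor h'' k)) as [_ [_ [_ S]]].
        destruct (S m y Hr) as [He _].
        assert (p : fmor (sproj X) k = fmor pi m) by (rewrite <- (proj2 hh'' k); exact (eq_sym He)).
        exists p. pose proof (proj2 Hs (exist _ (k, m) p : mor (pbc pi X))) as Hx. simpl in Hx.
        rewrite <- Hx. apply pickM_uniq. exact Hr.
      * intros [p ->]. pose proof (proj2 Hs (exist _ (k, m) p : mor (pbc pi X))) as Hx. simpl in Hx.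
        rewrite <- Hx. apply pickM_spec.
Qed.

Definition sfid (X : semicat) : semifunctor X X.
Proof.
  refine {| fob := fun x => x; fmor := fun f => f |}; auto.
  intros; apply comp_pi.
Defined.

Lemma over_comp {B : semicat} (X Y Z : sobj B) f g :
  over X Y f -> over Y Z g -> over X Z (sfcomp f g).
Proof.
  intros [A1 A2] [B1 B2]. split; intros; [exact (eq_trans (B1 _) (A1 _)) | exact (eq_trans (B2 _) (A2 _))].
Qed.

Lemma over_id {B : semicat} (X : sobj B) : over X X (sfid (carrier X)).
Proof. split; reflexivity. Qed.

Lemma pbmap_over {B E : semicat} (pi : semifunctor E B) (X X' : sobj B) k hk :
  over (pbobj pi X) (pbobj pi X') (pbmap pi (X := X) (X' := X') k hk).
Proof.
  destruct hk as [H1 H2]. split; intros; simpl; [apply H1 | apply H2].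
Qed.

Lemma pbmap_comp_ob {B E : semicat} (pi : semifunctor E B) (X1 X2 X3 : sobj B) f hf g hg hfg u :
  fob (pbmap pi (X := X2) (X' := X3) g hg) (fob (pbmap pi (X := X1) (X' := X2) f hf) u)
  = fob (pbmap pi (X := X1) (X' := X3) (sfcomp f g) hfg) u.
Proof. apply pbob_eq. reflexivity. Qed.

Lemma pbmap_comp_mor {B E : semicat} (pi : semifunctor E B) (X1 X2 X3 : sobj B) f hf g hg hfg u :
  fmor (pbmap pi (X := X2) (X' := X3) g hg) (fmor (pbmap pi (X := X1) (X' := X2) f hf) u)
  = fmor (pbmap pi (X := X1) (X' := X3) (sfcomp f g) hfg) u.
Proof. apply pbmor_eq. reflexivity. Qed.

Lemma pbmap_ext_ob {B E : semicat} (pi : semifunctor E B) (X X' : sobj B) k hk k' hk' u :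
  sfeq k k' -> fob (pbmap pi (X := X) (X' := X') k hk) u = fob (pbmap pi k' hk') u.
Proof. intros [H1 _]. apply pbob_eq. simpl. rewrite H1. reflexivity. Qed.

Lemma pbmap_ext_mor {B E : semicat} (pi : semifunctor E B) (X X' : sobj B) k hk k' hk' u :
  sfeq k k' -> fmor (pbmap pi (X := X) (X' := X') k hk) u = fmor (pbmap pi k' hk') u.
Proof. intros [_ H2]. apply pbmor_eq. simpl. rewrite H2. reflexivity. Qed.

Definition S1 : semicat.
Proof.
  refine {| ob := unit; mor := Empty_set; dom := fun f => match f with end;
            cod := fun f => match f with end; comp := fun f g _ => match f with end |};
  intros f; destruct f.
Defined.

Definition S1obj {B : semicat} (b : ob B) : sobj B.
Proof.
  refine (Build_sobj S1 {| fob := fun _ => b; fmor := fun f : mor S1 => match f with end |});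
  intros f; destruct f.
Defined.

Definition S2 : semicat.
Proof.
  refine {| ob := bool; mor := unit; dom := fun _ => false; cod := fun _ => true;
            comp := fun _ _ _ => tt |}; reflexivity.
Defined.

Definition S2obj {B : semicat} (g : mor B) : sobj B.
Proof.
  refine (Build_sobj S2 {| fob := fun b : ob S2 => if b then cod g else dom g;
                           fmor := fun _ : mor S2 => g |}).
  - reflexivity.
  - reflexivity.
  - intros f f' p. discriminate p.
Defined.

Inductive O3 := o0 | o1 | o2.
Inductive M3 := ma | mc | mac.
Definition dom3 (m : M3) : O3 := match m with ma => o0 | mc => o1 | mac => o0 end.
Definition cod3 (m : M3) : O3 := match m with ma => o1 | mc => o2 | mac => o2 end.

Definition S3 : semicat.
Proof.
  refine {| ob := O3; mor := M3; dom := dom3; cod := cod3; comp := fun _ _ _ => mac |}.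
  - intros [] [] p; simpl in *; try discriminate; reflexivity.
  - intros [] [] p; simpl in *; try discriminate; reflexivity.
  - reflexivity.
Defined.

Section S3sec.
Context {B : semicat} (g1 g2 : mor B) (pg : cod g1 = dom g2).

Definition S3obj : sobj B.
Proof.
  refine (Build_sobj S3 {| fob := fun o : ob S3 => match o with o0 => dom g1 | o1 => cod g1 | o2 => cod g2 end;
                           fmor := fun m : mor S3 => match m with ma => g1 | mc => g2 | mac => comp g1 g2 pg end |}).
  - intros []; simpl; [reflexivity | exact (eq_sym pg) | apply comp_dom].
  - intros []; simpl; [reflexivity | reflexivity | apply comp_cod].
  - intros [] [] p p'; simpl in *; try discriminate. apply comp_pi.
Defined.

Definition iota_a : semifunctor (carrier (S2obj g1)) (carrier S3obj).
Proof.
  refine (@Build_semifunctor S2 S3 (fun b : bool => if b then o1 else o0) (fun _ => ma) _ _ _).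
  - reflexivity.
  - reflexivity.
  - intros f f' p. discriminate p.
Defined.

Lemma iota_a_over : over (S2obj g1) S3obj iota_a.
Proof. split; [intros []|intros []]; reflexivity. Qed.

Definition iota_c : semifunctor (carrier (S2obj g2)) (carrier S3obj).
Proof.
  refine (@Build_semifunctor S2 S3 (fun b : bool => if b then o2 else o1) (fun _ => mc) _ _ _).
  - reflexivity.
  - reflexivity.
  - intros f f' p. discriminate p.
Defined.

Lemma iota_c_over : over (S2obj g2) S3obj iota_c.
Proof. split; [intros []|intros []]; simpl; auto. Qed.

Definition j_1 : semifunctor (carrier (S1obj (cod g1))) (carrier (S2obj g1)).
Proof.
  refine (@Build_semifunctor S1 S2 (fun _ => true) (fun f => match f with end) _ _ _);
  intros f; destruct f.
Defined.

Lemma j_1_over : over (S1obj (cod g1)) (S2obj g1) j_1.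
Proof. split; [intros []|intros []]; reflexivity. Qed.

Definition j_2 : semifunctor (carrier (S1obj (cod g1))) (carrier (S2obj g2)).
Proof.
  refine (@Build_semifunctor S1 S2 (fun _ => false) (fun f => match f with end) _ _ _);
  intros f; destruct f.
Defined.

Lemma j_2_over : over (S1obj (cod g1)) (S2obj g2) j_2.
Proof. split; [intros []|intros []]; simpl; auto. Qed.
End S3sec.

Section Ext.
Context {B E : semicat} (pi : semifunctor E B) (Hexp : exponentiable pi)
  (g1 g2 : mor B) (pg : cod g1 = dom g2).
Local Notation P3o := (S3obj g1 g2 pg).

Lemma ext_uniq (Y : sobj B) (H1 H2 : semifunctor (pbc pi P3o) (carrier Y))
  (ho1 : over (pbobj pi P3o) Y H1) (ho2 : over (pbobj pi P3o) Y H2) :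
  (forall x, fob H1 x = fob H2 x) ->
  (forall u : mor (pbc pi P3o), fst (proj1_sig (u : pbmor pi P3o)) <> mac -> fmor H1 u = fmor H2 u) ->
  sfeq H1 H2.
Proof.
  intros Hob Hmor.
  destruct (Hexp Y) as [R [eps [heps Huniv]]].
  destruct (Huniv P3o H1 ho1) as [k1 [hk1 [Hk1 _]]].
  destruct (Huniv P3o H2 ho2) as [k2 [hk2 [Hk2 _]]].
  assert (Part : forall (g : mor B) (X2 := S2obj g) (io : semifunctor (carrier X2) (carrier P3o))
            (hio : over X2 P3o io),
            (forall u : mor (pbc pi X2), fst (proj1_sig (fmor (pbmap pi io hio) u : pbmor pi P3o)) <> mac) ->
            sfeq (sfcomp io k1) (sfcomp io k2)).
  { intros g X2 io hio Hne.
    set (ha := sfcomp (pbmap pi io hio) H1).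
    assert (hha : over (pbobj pi X2) Y ha) by (apply over_comp with (Y := pbobj pi P3o); [apply pbmap_over | exact ho1]).
    destruct (Huniv X2 ha hha) as [ka [hka [_ Ua]]].
    assert (C1 := Ua (sfcomp io k1) (over_comp _ _ _ _ _ hio hk1)).
    assert (C2 := Ua (sfcomp io k2) (over_comp _ _ _ _ _ hio hk2)).
    destruct C1 as [C1o C1m].
    { split.
      - intro u. exact (eq_trans (f_equal (fob eps) (eq_sym (pbmap_comp_ob pi _ _ _ io hio k1 hk1 _ u))) (proj1 Hk1 _)).
      - intro u. exact (eq_trans (f_equal (fmor eps) (eq_sym (pbmap_comp_mor pi _ _ _ io hio k1 hk1 _ u))) (proj2 Hk1 _)). }
    destruct C2 as [C2o C2m].
    { split.
      - intro u. refine (eq_trans (f_equal (fob eps) (eq_sym (pbmap_comp_ob pi _ _ _ io hio k2 hk2 _ u))) _).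
        refine (eq_trans (proj1 Hk2 _) _). symmetry; apply Hob.
      - intro u. refine (eq_trans (f_equal (fmor eps) (eq_sym (pbmap_comp_mor pi _ _ _ io hio k2 hk2 _ u))) _).
        refine (eq_trans (proj2 Hk2 _) _). symmetry; apply Hmor. apply Hne. }
    split; intro x; [rewrite C1o, C2o | rewrite C1m, C2m]; reflexivity. }
  assert (Pa := Part g1 (iota_a g1 g2 pg) (iota_a_over g1 g2 pg) ltac:(intros u; simpl; discriminate)).
  assert (Pc := Part g2 (iota_c g1 g2 pg) (iota_c_over g1 g2 pg) ltac:(intros u; simpl; discriminate)).
  assert (Hk : sfeq k1 k2).
  { split.
    - intros []; [apply (proj1 Pa false) | apply (proj1 Pa true) | apply (proj1 Pc true)].
    - assert (Ema : fmor k1 ma = fmor k2 ma) by apply (proj2 Pa tt).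
      assert (Emc : fmor k1 mc = fmor k2 mc) by apply (proj2 Pc tt).
      intros []; auto.
      assert (q1 : cod (fmor k1 ma) = dom (fmor k1 mc)) by (rewrite fcod, fdom; reflexivity).
      assert (q2 : cod (fmor k2 ma) = dom (fmor k2 mc)) by (rewrite fcod, fdom; reflexivity).
      refine (eq_trans (fcomp k1 ma mc (eq_refl : cod (ma : mor (carrier P3o)) = dom (mc : mor (carrier P3o))) q1) _).
      refine (eq_trans _ (eq_sym (fcomp k2 ma mc (eq_refl : cod (ma : mor (carrier P3o)) = dom (mc : mor (carrier P3o))) q2))).
      apply comp_congr; auto. }
  split; [exact Hob|].
  intro u. refine (eq_trans (eq_sym (proj2 Hk1 u)) (eq_trans _ (proj2 Hk2 u))).
  exact (f_equal (fmor eps) (pbmap_ext_mor pi _ _ k1 hk1 k2 hk2 u Hk)).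
Qed.

Section K3.
Context (R : sobj B) (al : semifunctor (carrier (S2obj g1)) (carrier R))
  (be : semifunctor (carrier (S2obj g2)) (carrier R)) (mid : fob al true = fob be false).

Lemma k3_pk : cod (fmor al tt) = dom (fmor be tt).
Proof. rewrite fcod, fdom. exact mid. Qed.

Definition k3 : semifunctor (carrier P3o) (carrier R).
Proof.
  refine (@Build_semifunctor S3 (carrier R)
            (fun o => match o with o0 => fob al false | o1 => fob al true | o2 => fob be true end)
            (fun m => match m with ma => fmor al tt | mc => fmor be tt | mac => comp (fmor al tt) (fmor be tt) k3_pk end)
            _ _ _).
  - intros []; simpl.
    + apply (fdom al tt).
    + exact (eq_trans (fdom be tt) (eq_sym mid)).
    + rewrite comp_dom. apply (fdom al tt).
  - intros []; simpl.
    + apply (fcod al tt).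
    + apply (fcod be tt).
    + rewrite comp_cod. apply (fcod be tt).
  - intros [] [] p p'; simpl in *; try discriminate. apply comp_pi.
Defined.

Lemma k3_over (hal : over (S2obj g1) R al) (hbe : over (S2obj g2) R be) : over P3o R k3.
Proof.
  destruct hal as [A1 A2], hbe as [B1 B2]. split.
  - intros []; simpl; [apply (A1 false) | apply (A1 true) | apply (B1 true)].
  - intros []; simpl; [apply (A2 tt) | apply (B2 tt) |].
    assert (q : cod (fmor (sproj R) (fmor al tt)) = dom (fmor (sproj R) (fmor be tt)))
      by (rewrite fcod, fdom, k3_pk; reflexivity).
    refine (eq_trans (fcomp (sproj R) _ _ k3_pk q) _). apply comp_congr; [apply (A2 tt) | apply (B2 tt)].
Qed.

Lemma k3_a : sfeq (sfcomp (iota_a g1 g2 pg) k3) al.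
Proof. split; [intros []|intros []]; reflexivity. Qed.

Lemma k3_c : sfeq (sfcomp (iota_c g1 g2 pg) k3) be.
Proof. split; [intros []; [reflexivity | exact mid] | intros []; reflexivity]. Qed.
End K3.

Lemma ext_exist (Y : sobj B)
  (Ha : semifunctor (pbc pi (S2obj g1)) (carrier Y)) (hHa : over (pbobj pi (S2obj g1)) Y Ha)
  (Hc : semifunctor (pbc pi (S2obj g2)) (carrier Y)) (hHc : over (pbobj pi (S2obj g2)) Y Hc) :
  (forall (e : ob E) p p', fob Ha (exist _ (true, e) p : ob (pbc pi (S2obj g1))) =
                           fob Hc (exist _ (false, e) p' : ob (pbc pi (S2obj g2)))) ->
  exists (H : semifunctor (pbc pi P3o) (carrier Y)) (hH : over (pbobj pi P3o) Y H),
    (forall u, fob H (fob (pbmap pi (iota_a g1 g2 pg) (iota_a_over g1 g2 pg)) u) = fob Ha u) /\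
    (forall u, fmor H (fmor (pbmap pi (iota_a g1 g2 pg) (iota_a_over g1 g2 pg)) u) = fmor Ha u) /\
    (forall u, fob H (fob (pbmap pi (iota_c g1 g2 pg) (iota_c_over g1 g2 pg)) u) = fob Hc u) /\
    (forall u, fmor H (fmor (pbmap pi (iota_c g1 g2 pg) (iota_c_over g1 g2 pg)) u) = fmor Hc u).
Proof.
  intros Hmid.
  destruct (Hexp Y) as [R [eps [heps Huniv]]].
  destruct (Huniv _ Ha hHa) as [al [hal [Hal _]]].
  destruct (Huniv _ Hc hHc) as [be [hbe [Hbe _]]].
  assert (mid : fob al true = fob be false).
  { set (X1 := S1obj (cod g1)).
    set (h1 := sfcomp (pbmap pi (j_1 g1) (j_1_over g1)) Ha).
    assert (hh1 : over (pbobj pi X1) Y h1) by (apply over_comp with (Y := pbobj pi (S2obj g1)); [apply pbmap_over | exact hHa]).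
    destruct (Huniv X1 h1 hh1) as [ka [hka [_ Ua]]].
    destruct (Ua (sfcomp (j_1 g1) al) (over_comp _ _ _ _ _ (j_1_over g1) hal)) as [C1 _].
    { split.
      - intro u. exact (eq_trans (f_equal (fob eps) (eq_sym (pbmap_comp_ob pi _ _ _ _ (j_1_over g1) al hal _ u))) (proj1 Hal _)).
      - intros [[[] ?] ?]. }
    destruct (Ua (sfcomp (j_2 g1 g2) be) (over_comp _ _ _ _ _ (j_2_over g1 g2 pg) hbe)) as [C2 _].
    { split.
      - intro u. refine (eq_trans (f_equal (fob eps) (eq_sym (pbmap_comp_ob pi _ _ _ _ (j_2_over g1 g2 pg) be hbe _ u))) _).
        refine (eq_trans (proj1 Hbe _) _). destruct u as [[[] e] p]. simpl. symmetry. apply Hmid.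
      - intros [[[] ?] ?]. }
    exact (eq_trans (C1 tt) (eq_sym (C2 tt))). }
  set (hk := k3_over R al be mid hal hbe).
  exists (sfcomp (pbmap pi (k3 R al be mid) hk) eps).
  exists (over_comp _ _ _ _ _ (pbmap_over pi _ _ _ hk) heps).
  assert (ha := over_comp _ _ _ _ _ (iota_a_over g1 g2 pg) hk).
  assert (hc := over_comp _ _ _ _ _ (iota_c_over g1 g2 pg) hk).
  split; [|split; [|split]]; intro u.
  - refine (eq_trans (f_equal (fob eps) (pbmap_comp_ob pi _ _ _ _ _ _ hk ha u)) _).
    refine (eq_trans (f_equal (fob eps) (pbmap_ext_ob pi _ _ _ ha al hal u (k3_a R al be mid))) _).
    apply (proj1 Hal).
  - refine (eq_trans (f_equal (fmor eps) (pbmap_comp_mor pi _ _ _ _ _ _ hk ha u)) _).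
    refine (eq_trans (f_equal (fmor eps) (pbmap_ext_mor pi _ _ _ ha al hal u (k3_a R al be mid))) _).
    apply (proj2 Hal).
  - refine (eq_trans (f_equal (fob eps) (pbmap_comp_ob pi _ _ _ _ _ _ hk hc u)) _).
    refine (eq_trans (f_equal (fob eps) (pbmap_ext_ob pi _ _ _ hc be hbe u (k3_c R al be mid))) _).
    apply (proj1 Hbe).
  - refine (eq_trans (f_equal (fmor eps) (pbmap_comp_mor pi _ _ _ _ _ _ hk hc u)) _).
    refine (eq_trans (f_equal (fmor eps) (pbmap_ext_mor pi _ _ _ hc be hbe u (k3_c R al be mid))) _).
    apply (proj2 Hbe).
Qed.
End Ext.

Section QS.
Context {B E : semicat} (pi : semifunctor E B) (g1 g2 : mor B) (pg : cod g1 = dom g2).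
Local Notation P3o := (S3obj g1 g2 pg).
Local Notation Pob := (pbob pi P3o).

Definition mkP (o : O3) (e : ob E) (h : fob (sproj P3o) o = fob pi e) : Pob := exist _ (o, e) h.

Inductive Qm : Type :=
| qa (m : mor E) (h : fmor pi m = g1)
| qc (m : mor E) (h : fmor pi m = g2)
| qp (m1 m2 : mor E) (h1 : fmor pi m1 = g1) (h2 : fmor pi m2 = g2) (h : cod m1 = dom m2).

Definition qfst (w : Qm) : mor E := match w with qa m _ => m | qc m _ => m | qp m1 _ _ _ _ => m1 end.
Definition qsnd (w : Qm) : mor E := match w with qa m _ => m | qc m _ => m | qp _ m2 _ _ _ => m2 end.

Definition Qdom (w : Qm) : Pob :=
  match w with
  | qa m h => mkP o0 (dom m) (eq_trans (f_equal dom (eq_sym h)) (fdom pi m))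
  | qc m h => mkP o1 (dom m) (eq_trans pg (eq_trans (f_equal dom (eq_sym h)) (fdom pi m)))
  | qp m1 m2 h1 h2 h => mkP o0 (dom m1) (eq_trans (f_equal dom (eq_sym h1)) (fdom pi m1))
  end.

Definition Qcod (w : Qm) : Pob :=
  match w with
  | qa m h => mkP o1 (cod m) (eq_trans (f_equal cod (eq_sym h)) (fcod pi m))
  | qc m h => mkP o2 (cod m) (eq_trans (f_equal cod (eq_sym h)) (fcod pi m))
  | qp m1 m2 h1 h2 h => mkP o2 (cod m2) (eq_trans (f_equal cod (eq_sym h2)) (fcod pi m2))
  end.

Definition Qcomp (u v : Qm) : Qcod u = Qdom v -> Qm :=
  match u as u', v as v' return Qcod u' = Qdom v' -> Qm with
  | qa m1 h1, qc m2 h2 => fun p => qp m1 m2 h1 h2 (f_equal (fun x : Pob => snd (proj1_sig x)) p)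
  | _, _ => fun _ => u
  end.

Ltac ocontra p := let H := fresh in
  pose proof (f_equal (fun x : Pob => fst (proj1_sig x)) p) as H; simpl in H; discriminate H.

Definition Qsc : semicat.
Proof.
  refine {| ob := Pob; mor := Qm; dom := Qdom; cod := Qcod; comp := Qcomp |}.
  - intros [] [] p; try reflexivity; try ocontra p; apply pbob_eq; reflexivity.
  - intros [] [] p; try ocontra p; apply pbob_eq; reflexivity.
  - intros [] [] w p q p' q'; try ocontra p. destruct w; ocontra p'.
Defined.

Definition Qphi : semifunctor Qsc (pbc pi P3o).
Proof.
  refine (@Build_semifunctor Qsc (pbc pi P3o) (fun x => x)
    (fun w => match w with
              | qa m h => exist _ ((ma : mor S3), m) (eq_sym h)
              | qc m h => exist _ ((mc : mor S3), m) (eq_sym h)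
              | qp m1 m2 h1 h2 h => exist _ ((mac : mor S3), comp m1 m2 h) _
              end) _ _ _).
  Unshelve.
  4: { simpl. assert (q : cod (fmor pi m1) = dom (fmor pi m2)) by (rewrite fcod, fdom, h; reflexivity).
       rewrite (fcomp pi m1 m2 h q). apply comp_congr; auto. }
  - intros []; apply pbob_eq; simpl; try reflexivity. rewrite comp_dom. reflexivity.
  - intros []; apply pbob_eq; simpl; try reflexivity. rewrite comp_cod. reflexivity.
  - intros [] [] p p'; try ocontra p. apply pbmor_eq. simpl. f_equal. apply comp_pi.
Defined.

Definition Qobj : sobj B := Build_sobj Qsc (sfcomp Qphi (pbproj B E pi P3o)).

Lemma Qphi_over : over Qobj (pbobj pi P3o) Qphi.
Proof. split; reflexivity. Qed.
End QS.

Section Fin.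
Context {B E : semicat} (pi : semifunctor E B) (g1 g2 : mor B) (pg : cod g1 = dom g2).
Local Notation P3o := (S3obj g1 g2 pg).

Ltac bcontra p := let H := fresh in
  pose proof (f_equal (fun x => fst (proj1_sig x)) p) as H; simpl in H; discriminate H.

Definition QHa : semifunctor (pbc pi (S2obj g1)) (carrier (Qobj pi g1 g2 pg)).
Proof.
  refine (@Build_semifunctor (pbc pi (S2obj g1)) (Qsc pi g1 g2 pg)
     (fob (pbmap pi (iota_a g1 g2 pg) (iota_a_over g1 g2 pg)))
     (fun u => qa pi g1 g2 (snd (proj1_sig (u : pbmor pi (S2obj g1)))) (eq_sym (proj2_sig u))) _ _ _).
  - intros u. apply pbob_eq. reflexivity.
  - intros u. apply pbob_eq. reflexivity.
  - intros u v p. bcontra p.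
Defined.

Lemma QHa_over : over (pbobj pi (S2obj g1)) (Qobj pi g1 g2 pg) QHa.
Proof.
  split.
  - intro u. exact (proj1 (pbmap_over pi _ _ _ (iota_a_over g1 g2 pg)) u).
  - intro u. reflexivity.
Qed.

Definition QHc : semifunctor (pbc pi (S2obj g2)) (carrier (Qobj pi g1 g2 pg)).
Proof.
  refine (@Build_semifunctor (pbc pi (S2obj g2)) (Qsc pi g1 g2 pg)
     (fob (pbmap pi (iota_c g1 g2 pg) (iota_c_over g1 g2 pg)))
     (fun u => qc pi g1 g2 (snd (proj1_sig (u : pbmor pi (S2obj g2)))) (eq_sym (proj2_sig u))) _ _ _).
  - intros u. apply pbob_eq. reflexivity.
  - intros u. apply pbob_eq. reflexivity.
  - intros u v p. bcontra p.
Defined.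

Lemma QHc_over : over (pbobj pi (S2obj g2)) (Qobj pi g1 g2 pg) QHc.
Proof.
  split.
  - intro u. exact (proj1 (pbmap_over pi _ _ _ (iota_c_over g1 g2 pg)) u).
  - intro u. reflexivity.
Qed.
End Fin.

Lemma part14 {B E : semicat} (pi : semifunctor E B) :
  exponentiable pi -> unique_lifting_binary pi.
Proof.
  intros Hexp f g1 g2 pg Hcomp.
  destruct (ext_exist pi Hexp g1 g2 pg (Qobj pi g1 g2 pg) _ (QHa_over pi g1 g2 pg) _ (QHc_over pi g1 g2 pg))
    as [psi [hpsi [Eao [Eam [Eco Ecm]]]]].
  { intros e p p'. apply pbob_eq. reflexivity. }
  set (phi := Qphi pi g1 g2 pg).
  assert (Hid : sfeq (sfcomp psi phi) (sfid _)).
  { apply (ext_uniq pi Hexp g1 g2 pg (pbobj pi (S3obj g1 g2 pg))).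
    - apply over_comp with (Y := Qobj pi g1 g2 pg); [exact hpsi | apply Qphi_over].
    - apply over_id.
    - intros [[o e] p]. change (fob psi (exist _ (o, e) p) = exist _ (o, e) p). destruct o.
      + transitivity (fob psi (fob (pbmap pi (iota_a g1 g2 pg) (iota_a_over g1 g2 pg)) (exist _ (false, e) p))).
        { f_equal. apply pbob_eq; reflexivity. }
        rewrite Eao. apply pbob_eq; reflexivity.
      + transitivity (fob psi (fob (pbmap pi (iota_a g1 g2 pg) (iota_a_over g1 g2 pg)) (exist _ (true, e) p))).
        { f_equal. apply pbob_eq; reflexivity. }
        rewrite Eao. apply pbob_eq; reflexivity.
      + transitivity (fob psi (fob (pbmap pi (iota_c g1 g2 pg) (iota_c_over g1 g2 pg)) (exist _ (true, e) p))).
        { f_equal. apply pbob_eq; reflexivity. }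
        rewrite Eco. apply pbob_eq; reflexivity.
    - intros [[mm m] p] Hne. change (fmor phi (fmor psi (exist _ (mm, m) p)) = exist _ (mm, m) p).
      destruct mm; [| | exfalso; apply Hne; reflexivity].
      + transitivity (fmor phi (fmor psi (fmor (pbmap pi (iota_a g1 g2 pg) (iota_a_over g1 g2 pg)) (exist _ (tt, m) p)))).
        { f_equal. f_equal. apply pbmor_eq; reflexivity. }
        rewrite Eam. apply pbmor_eq; reflexivity.
      + transitivity (fmor phi (fmor psi (fmor (pbmap pi (iota_c g1 g2 pg) (iota_c_over g1 g2 pg)) (exist _ (tt, m) p)))).
        { f_equal. f_equal. apply pbmor_eq; reflexivity. }
        rewrite Ecm. apply pbmor_eq; reflexivity. }
  set (U := exist _ ((mac : mor S3), f) Hcomp : mor (pbc pi (S3obj g1 g2 pg))).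
  assert (Hfac : forall a b (ha : fmor pi a = g1) (hb : fmor pi b = g2) (q : cod a = dom b),
             comp a b q = f -> qfst pi g1 g2 (fmor psi U) = a /\ qsnd pi g1 g2 (fmor psi U) = b).
  { intros a b ha hb q Eq.
    set (A := exist _ ((ma : mor S3), a) (eq_sym ha) : mor (pbc pi (S3obj g1 g2 pg))).
    set (C := exist _ ((mc : mor S3), b) (eq_sym hb) : mor (pbc pi (S3obj g1 g2 pg))).
    assert (hAC : pbcod _ _ pi _ A = pbdom _ _ pi _ C) by (apply pbob_eq; simpl; rewrite q; reflexivity).
    assert (HU : U = pbcomp _ _ pi _ A C hAC).
    { apply pbmor_eq. simpl. f_equal. rewrite <- Eq. apply comp_pi. }
    assert (HA : fmor psi A = qa pi g1 g2 a ha).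
    { transitivity (fmor psi (fmor (pbmap pi (iota_a g1 g2 pg) (iota_a_over g1 g2 pg)) (exist _ (tt, a) (eq_sym ha)))).
      { f_equal. apply pbmor_eq; reflexivity. }
      rewrite Eam. simpl. f_equal. apply proof_irrelevance. }
    assert (HC : fmor psi C = qc pi g1 g2 b hb).
    { transitivity (fmor psi (fmor (pbmap pi (iota_c g1 g2 pg) (iota_c_over g1 g2 pg)) (exist _ (tt, b) (eq_sym hb)))).
      { f_equal. apply pbmor_eq; reflexivity. }
      rewrite Ecm. simpl. f_equal. apply proof_irrelevance. }
    assert (p' : cod (fmor psi A) = dom (fmor psi C)) by (rewrite fcod, fdom; f_equal; exact hAC).
    assert (p'' : Qcod pi g1 g2 pg (qa pi g1 g2 a ha) = Qdom pi g1 g2 pg (qc pi g1 g2 b hb))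
      by (apply pbob_eq; simpl; rewrite q; reflexivity).
    assert (Heq : fmor psi U = comp (s := Qsc pi g1 g2 pg) (qa pi g1 g2 a ha) (qc pi g1 g2 b hb) p'').
    { rewrite HU. exact (eq_trans (fcomp psi A C hAC p') (comp_congr (Qsc pi g1 g2 pg) _ _ _ _ p' p'' HA HC)). }
    rewrite Heq. simpl. auto. }
  pose proof (proj2 Hid U) as HU. change (fmor phi (fmor psi U) = U) in HU.
  destruct (fmor psi U) as [m h | m h | m1 m2 h1 h2 h] eqn:Ew.
  - exfalso. pose proof (f_equal (fun x => fst (proj1_sig x)) HU) as K. simpl in K. discriminate.
  - exfalso. pose proof (f_equal (fun x => fst (proj1_sig x)) HU) as K. simpl in K. discriminate.
  - pose proof (f_equal (fun x => snd (proj1_sig x)) HU) as K. simpl in K.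
    exists (m1, m2). split.
    + simpl. split; auto. split; auto. exists h. exact K.
    + intros [a b] [ha [hb [q Eq]]]. simpl in *.
      destruct (Hfac a b ha hb q Eq) as [F1 F2]. simpl in F1, F2. subst. reflexivity.
Qed.

Theorem proposition3p9 (B E : semicat) (pi : semifunctor E B) :
  (exponentiable pi <-> nabla_preserves_opcartesian pi) /\
  (nabla_preserves_opcartesian pi <-> unique_lifting_nary pi) /\
  (unique_lifting_nary pi <-> unique_lifting_binary pi).
Proof.
  pose proof (part34 pi) as H34. pose proof (part23 pi) as H23.
  pose proof (part14 pi) as H14. pose proof (part41 pi) as H41.
  split; [|split; auto].
  split; intro H.
  - apply H23, H34, H14, H.
  - apply H41, H34, H23, H.
Qed.
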